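(* Let $a=(a_1,a_2)\in(0,\infty)^2$ and $t=(t_1,t_2)$ with $1<t_1<t_2$, and let $$A_0:=\frac{\sqrt3}{2}\left(\frac{a_2t_2(t_2-1)S_1(t_2+2)}{a_1t_1(t_1-1)S_1(t_1+2)}\right)^{\frac1{t_2-t_1}}.$$ Then: (1) if $0<A<A_0$, $(1/2,\sqrt3/2)$ is a strict local minimizer of $(x,y)\mapsto E_{V^{LJ}_{a,t}}(x,y,A)$; (2) if $A>A_0$, $(1/2,\sqrt3/2)$ is a strict local maximizer of $(x,y)\mapsto E_{V^{LJ}_{a,t}}(x,y,A)$.
   Context: $V^{LJ}_{a,t}(r)=\frac{a_2}{r^{t_2}}-\frac{a_1}{r^{t_1}}$ for $r>0$. For $A>0$, $x\in\mathbb R$, $y>0$, $E_{f}(x,y,A)=\sum_{m,n} f\left(A\left[\frac1y(m+xn)^2+yn^2\right]\right)$, where $\sum_{m,n}$ denotes summation over all $(m,n)\in\mathbb Z^2\setminus\{(0,0)\}$. $S_1(s)=\sum_{m,n}\frac{m^4}{(m^2+mn+n^2)^s}$. *)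

(* Defs.v *)
From Stdlib Require Import Reals ZArith Bool ClassicalEpsilon.
Open Scope R_scope.

Definition sq_partial (F : Z -> Z -> R) (N : nat) : R :=
  sum_f_R0 (fun i =>
    sum_f_R0 (fun j =>
      let m := (Z.of_nat i - Z.of_nat N)%Z in
      let n := (Z.of_nat j - Z.of_nat N)%Z in
      if (Z.eqb m 0 && Z.eqb n 0)%bool then 0 else F m n) (2 * N)) (2 * N).

(* The lattice sum over Z^2 \ {(0,0)}: limit of square partial sums
   (all sums used below are absolutely convergent, so this is the sum). *)
Definition lattice_sum (F : Z -> Z -> R) : R :=
  epsilon (inhabits 0) (fun L => Un_cv (sq_partial F) L).

Definition V_LJ (a1 a2 t1 t2 : R) (r : R) : R :=
  a2 / Rpower r t2 - a1 / Rpower r t1.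

Definition E_f (f : R -> R) (x y A : R) : R :=
  lattice_sum (fun m n =>
    f (A * ((1 / y) * (IZR m + x * IZR n) ^ 2 + y * (IZR n) ^ 2))).

Definition S1 (s : R) : R :=
  lattice_sum (fun m n =>
    (IZR m) ^ 4 / Rpower ((IZR m) ^ 2 + IZR m * IZR n + (IZR n) ^ 2) s).

Definition strict_local_min (g : R -> R -> R) (x0 y0 : R) : Prop :=
  exists eps, eps > 0 /\
    forall x y, y > 0 -> Rabs (x - x0) < eps -> Rabs (y - y0) < eps ->
      (x, y) <> (x0, y0) -> g x0 y0 < g x y.

Definition strict_local_max (g : R -> R -> R) (x0 y0 : R) : Prop :=
  exists eps, eps > 0 /\
    forall x y, y > 0 -> Rabs (x - x0) < eps -> Rabs (y - y0) < eps ->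
      (x, y) <> (x0, y0) -> g x y < g x0 y0.

Definition A0 (a1 a2 t1 t2 : R) : R :=
  sqrt 3 / 2 *
  Rpower ((a2 * t2 * (t2 - 1) * S1 (t2 + 2)) / (a1 * t1 * (t1 - 1) * S1 (t1 + 2)))
         (1 / (t2 - t1)).

(* Main.v *)
Require Import Defs.
From Stdlib Require Import Reals Lra Lia Psatz ZArith Bool ClassicalEpsilon.
From Coquelicot Require Import Coquelicot.
Open Scope R_scope.

Definition Gz (F : Z -> Z -> R) (m n : Z) : R :=
  if (Z.eqb m 0 && Z.eqb n 0)%bool then 0 else F m n.

Definition zi (i N : nat) : Z := (Z.of_nat i - Z.of_nat N)%Z.

Lemma sq_partial_eq F N : sq_partial F N =
  sum_f_R0 (fun i => sum_f_R0 (fun j => Gz F (zi i N) (zi j N)) (2*N)) (2*N).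
Proof. reflexivity. Qed.

Definition conv F L := Un_cv (sq_partial F) L.

Lemma lattice_sum_eq F L : conv F L -> lattice_sum F = L.
Proof.
  intro H. unfold lattice_sum.
  assert (E : exists L0, Un_cv (sq_partial F) L0) by (exists L; exact H).
  pose proof (epsilon_spec (inhabits 0) (fun L0 => Un_cv (sq_partial F) L0) E) as H2.
  simpl in H2. eapply UL_sequence; eauto.
Qed.

Lemma sum_ext (f g : nat -> R) n : (forall i, (i <= n)%nat -> f i = g i) ->
  sum_f_R0 f n = sum_f_R0 g n.
Proof. intros; apply sum_eq; auto. Qed.

Lemma sq_partial_ext F F' N :
  (forall m n, (m, n) <> (0%Z, 0%Z) -> F m n = F' m n) ->
  sq_partial F N = sq_partial F' N.
Proof.
  intro H. rewrite !sq_partial_eq. apply sum_ext; intros; apply sum_ext; intros.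
  unfold Gz. destruct (Z.eqb_spec (zi i N) 0); destruct (Z.eqb_spec (zi i0 N) 0);
  simpl; auto; apply H; intro E; inversion E; subst; try lia; try congruence.
Qed.

Lemma conv_ext F F' L :
  (forall m n, (m, n) <> (0%Z, 0%Z) -> F m n = F' m n) -> conv F L -> conv F' L.
Proof.
  intros H C. unfold conv. intros e he. destruct (C e he) as [N HN].
  exists N. intros n hn. rewrite <- (sq_partial_ext F F' n H). auto.
Qed.

Lemma sq_partial_lin a b F G N :
  sq_partial (fun m n => a * F m n + b * G m n) N = a * sq_partial F N + b * sq_partial G N.
Proof.
  rewrite !sq_partial_eq.
  rewrite !scal_sum.
  rewrite <- sum_plus. apply sum_ext; intros.
  rewrite (Rmult_comm (sum_f_R0 _ _) a), (Rmult_comm (sum_f_R0 _ _) b).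
  rewrite !scal_sum. rewrite <- sum_plus. apply sum_ext; intros.
  unfold Gz. destruct (_ && _)%bool; ring.
Qed.

Lemma CV_scal (u : nat -> R) a l : Un_cv u l -> Un_cv (fun n => a * u n) (a * l).
Proof.
  intro H. apply (CV_mult (fun _ => a) u a l); auto.
  intros e he; exists 0%nat; intros; unfold Rdist; rewrite Rminus_diag, Rabs_R0; auto.
Qed.

Lemma conv_lin a b F G LF LG : conv F LF -> conv G LG ->
  conv (fun m n => a * F m n + b * G m n) (a * LF + b * LG).
Proof.
  intros HF HG. unfold conv.
  intros e he. destruct (CV_plus _ _ _ _ (CV_scal _ a _ HF) (CV_scal _ b _ HG) e he) as [N HN].
  exists N. intros n hn. rewrite sq_partial_lin. apply HN; auto.
Qed.

Lemma conv_unique F L1 L2 : conv F L1 -> conv F L2 -> L1 = L2.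
Proof. intros; eapply UL_sequence; eauto. Qed.

Definition Pz (m n : Z) : R := IZR m ^ 2 + IZR m * IZR n + IZR n ^ 2.

Lemma Pz_lower m n : (IZR m ^ 2 + IZR n ^ 2) / 2 <= Pz m n.
Proof. unfold Pz. pose proof (pow2_ge_0 (IZR m + IZR n)). simpl in *. nra. Qed.

Lemma Pz_pos m n : (m, n) <> (0%Z, 0%Z) -> 0 < Pz m n.
Proof.
  intro H. assert (IZR m <> 0 \/ IZR n <> 0).
  { destruct (Z.eq_dec m 0); destruct (Z.eq_dec n 0); subst; try congruence;
    [right|left|left]; apply not_0_IZR; auto. }
  pose proof (Pz_lower m n). pose proof (pow2_ge_0 (IZR m)). pose proof (pow2_ge_0 (IZR n)).
  destruct H0.
  - assert (0 < IZR m ^ 2) by (simpl; rewrite Rmult_1_r; apply Rsqr_pos_lt; auto). lra.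
  - assert (0 < IZR n ^ 2) by (simpl; rewrite Rmult_1_r; apply Rsqr_pos_lt; auto). lra.
Qed.

Definition Dom (s C : R) (F : Z -> Z -> R) :=
  0 <= C /\ forall m n, (m, n) <> (0%Z, 0%Z) -> Rabs (F m n) <= C / Rpower (Pz m n) s.

Lemma Rpower_pos x y : 0 < Rpower x y.
Proof. unfold Rpower; apply exp_pos. Qed.

Lemma Rpower_sq_half x s : 0 < x ->
  Rpower (x ^ 2 / 2) s = Rpower x (2 * s) * / Rpower 2 s.
Proof.
  intro hx. unfold Rpower. rewrite <- exp_Ropp, <- exp_plus. f_equal.
  unfold Rdiv. rewrite ln_mult; [|apply pow_lt; auto|lra]. rewrite ln_Rinv by lra.
  rewrite ln_pow; auto. simpl. ring.
Qed.

Lemma big_Pz m n N : (Z.of_nat N + 1 <= Z.abs m \/ Z.of_nat N + 1 <= Z.abs n)%Z ->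
  (INR N + 1) ^ 2 / 2 <= Pz m n.
Proof.
  intro H. pose proof (Pz_lower m n).
  assert (forall z, (Z.of_nat N + 1 <= Z.abs z)%Z -> (INR N + 1) ^ 2 <= IZR z ^ 2).
  { intros z hz. apply IZR_le in hz. rewrite abs_IZR, plus_IZR, <- INR_IZR_INZ in hz.
    rewrite <- (pow2_abs (IZR z)). pose proof (pos_INR N). apply pow_incr; lra. }
  pose proof (pow2_ge_0 (IZR m)). pose proof (pow2_ge_0 (IZR n)).
  destruct H; [pose proof (H1 _ H) | pose proof (H1 _ H)]; lra.
Qed.

Definition beta (s C : R) (N : nat) := C * Rpower 2 s / Rpower (INR N + 1) (2 * s).

Lemma beta_nonneg s C N : 0 <= C -> 0 <= beta s C N.
Proof.
  intro. unfold beta. pose proof (Rpower_pos 2 s). pose proof (Rpower_pos (INR N + 1) (2*s)).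
  apply Rmult_le_pos; [apply Rmult_le_pos; lra| left; apply Rinv_0_lt_compat; auto].
Qed.

Lemma term_bound s C F N m n : 0 < s -> Dom s C F ->
  (Z.of_nat N + 1 <= Z.abs m \/ Z.of_nat N + 1 <= Z.abs n)%Z ->
  Rabs (Gz F m n) <= beta s C N.
Proof.
  intros hs [hC HF] H. unfold Gz.
  destruct (Z.eqb_spec m 0); destruct (Z.eqb_spec n 0); simpl;
  try (rewrite Rabs_R0; apply beta_nonneg; auto);
  (eapply Rle_trans; [apply HF; intro E; inversion E; congruence|]).
  all: pose proof (big_Pz m n N H) as HP; pose proof (pos_INR N) as hN;
  assert (h1 : 0 < (INR N + 1) ^ 2 / 2) by (apply Rdiv_lt_0_compat; [apply pow_lt|]; lra);
  assert (h2 : Rpower ((INR N + 1) ^ 2 / 2) s <= Rpower (Pz m n) s)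
    by (apply Rle_Rpower_l; lra);
  rewrite Rpower_sq_half in h2 by lra;
  unfold beta; pose proof (Rpower_pos 2 s); pose proof (Rpower_pos (INR N+1) (2*s));
  pose proof (Rpower_pos (Pz m n) s);
  unfold Rdiv; rewrite Rmult_assoc; apply Rmult_le_compat_l; auto;
  rewrite <- (Rinv_inv (Rpower 2 s)), <- Rinv_mult;
  apply Rinv_le_contravar; [apply Rmult_lt_0_compat; auto; apply Rinv_0_lt_compat; auto|
   rewrite Rmult_comm; auto].
Qed.

Lemma box_succ (f : Z -> R) N :
  sum_f_R0 (fun j => f (zi j (S N))) (2 * S N) =
  f (- (Z.of_nat N + 1))%Z + sum_f_R0 (fun j => f (zi j N)) (2 * N) + f (Z.of_nat N + 1)%Z.
Proof.
  replace (2 * S N)%nat with (S (S (2 * N))) by lia.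
  rewrite tech5. rewrite decomp_sum by lia. simpl Init.Nat.pred.
  f_equal; [f_equal|].
  - f_equal. unfold zi. lia.
  - apply sum_ext; intros. f_equal. unfold zi. lia.
  - f_equal. unfold zi. lia.
Qed.

Lemma sum_bound (g : nat -> R) n B : (forall j, (j <= n)%nat -> Rabs (g j) <= B) ->
  Rabs (sum_f_R0 g n) <= INR (S n) * B.
Proof.
  intro H. eapply Rle_trans; [apply sum_f_R0_triangle|].
  rewrite Rmult_comm, <- sum_cte. apply sum_Rle. auto.
Qed.

Definition Row F K m := sum_f_R0 (fun j => Gz F m (zi j K)) (2 * K).

Lemma ring_decomp F N : sq_partial F (S N) - sq_partial F N =
  Row F (S N) (- (Z.of_nat N + 1))%Z + Row F (S N) (Z.of_nat N + 1)%Z +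
  sum_f_R0 (fun i => Gz F (zi i N) (- (Z.of_nat N + 1))%Z + Gz F (zi i N) (Z.of_nat N + 1)%Z) (2 * N).
Proof.
  rewrite !sq_partial_eq.
  change (sum_f_R0 (fun i => sum_f_R0 (fun j => Gz F (zi i (S N)) (zi j (S N))) (2 * S N)) (2 * S N))
    with (sum_f_R0 (fun i => Row F (S N) (zi i (S N))) (2 * S N)).
  rewrite (box_succ (Row F (S N))).
  assert (sum_f_R0 (fun i => Row F (S N) (zi i N)) (2 * N) =
    sum_f_R0 (fun i => Gz F (zi i N) (- (Z.of_nat N + 1))%Z + Gz F (zi i N) (Z.of_nat N + 1)%Z) (2 * N)
    + sum_f_R0 (fun i => sum_f_R0 (fun j => Gz F (zi i N) (zi j N)) (2 * N)) (2 * N)).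
  { rewrite <- sum_plus. apply sum_ext; intros. unfold Row. rewrite (box_succ (Gz F (zi i N))). ring. }
  rewrite H. ring.
Qed.

Lemma ring_bound s C F N : 0 < s -> Dom s C F ->
  Rabs (sq_partial F (S N) - sq_partial F N) <= (8 * INR N + 8) * beta s C N.
Proof.
  intros hs hD. rewrite ring_decomp.
  assert (hb := beta_nonneg s C N (proj1 hD)).
  assert (R1 : forall m, (Z.of_nat N + 1 <= Z.abs m)%Z -> Rabs (Row F (S N) m) <= INR (S (2 * S N)) * beta s C N).
  { intros m hm. apply sum_bound. intros. apply term_bound; auto. }
  assert (R2 : Rabs (sum_f_R0 (fun i => Gz F (zi i N) (- (Z.of_nat N + 1))%Z + Gz F (zi i N) (Z.of_nat N + 1)%Z) (2 * N))
    <= INR (S (2 * N)) * (2 * beta s C N)).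
  { apply sum_bound. intros. eapply Rle_trans; [apply Rabs_triang|].
    assert (Rabs (Gz F (zi j N) (- (Z.of_nat N + 1))) <= beta s C N) by (apply term_bound; auto; right; lia).
    assert (Rabs (Gz F (zi j N) (Z.of_nat N + 1)) <= beta s C N) by (apply term_bound; auto; right; lia).
    lra. }
  pose proof (R1 (- (Z.of_nat N + 1))%Z ltac:(lia)). pose proof (R1 (Z.of_nat N + 1)%Z ltac:(lia)).
  assert (E1 : INR (S (2 * S N)) = 2 * INR N + 3) by (replace (S (2 * S N)) with (2*N+3)%nat by lia; rewrite plus_INR, mult_INR; simpl; ring).
  assert (E2 : INR (S (2 * N)) = 2 * INR N + 1) by (replace (S (2 * N)) with (2*N+1)%nat by lia; rewrite plus_INR, mult_INR; simpl; ring).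
  rewrite E1 in *. rewrite E2 in *.
  eapply Rle_trans; [apply Rabs_triang|].
  eapply Rle_trans; [apply Rplus_le_compat_r; apply Rabs_triang|]. lra.
Qed.

Lemma Rpower_1_base q : Rpower 1 q = 1.
Proof. unfold Rpower. rewrite ln_1, Rmult_0_r, exp_0. auto. Qed.

Lemma pser_step q k : 1 < q -> 1 <= k ->
  / Rpower (k + 1) q <= / (q - 1) * (Rpower k (1 - q) - Rpower (k + 1) (1 - q)).
Proof.
  intros hq hk.
  destruct (MVT_cor2 (fun x => Rpower x (1 - q)) (fun x => (1 - q) * Rpower x (1 - q - 1)) k (k + 1))
    as [c [Hc1 Hc2]]; [lra| intros; apply derivable_pt_lim_power; lra |]. cbv beta in Hc1.
  replace (Rpower k (1 - q) - Rpower (k + 1) (1 - q)) with (- ((1 - q) * Rpower c (1 - q - 1) * (k + 1 - k))) by (rewrite <- Hc1; ring).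
  replace (1 - q - 1) with (- q) by ring. rewrite Rpower_Ropp.
  replace (/ (q - 1) * - ((1 - q) * / Rpower c q * (k + 1 - k))) with (/ Rpower c q) by (pose proof (Rpower_pos c q); field; lra).
  apply Rinv_le_contravar; [apply Rpower_pos|]. apply Rle_Rpower_l; lra.
Qed.

Lemma pser_bound q n : 1 < q ->
  sum_f_R0 (fun k => / Rpower (INR k + 1) q) n <= 1 + / (q - 1) * (1 - Rpower (INR n + 1) (1 - q)).
Proof.
  intro hq. induction n.
  - simpl. rewrite Rplus_0_l, Rpower_1_base, Rpower_1_base. lra.
  - rewrite tech5. rewrite S_INR.
    pose proof (pser_step q (INR n + 1) hq). pose proof (pos_INR n). lra.
Qed.

Lemma pser q : 1 < q -> {l | Un_cv (fun n => sum_f_R0 (fun k => / Rpower (INR k + 1) q) n) l}.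
Proof.
  intro hq. apply growing_cv.
  - intro n. rewrite tech5. pose proof (Rpower_pos (INR (S n) + 1) q).
    pose proof (Rinv_0_lt_compat _ H). lra.
  - exists (1 + / (q - 1)). intros x [n ->]. eapply Rle_trans; [apply pser_bound; auto|].
    pose proof (Rpower_pos (INR n + 1) (1 - q)). assert (0 < / (q-1)) by (apply Rinv_0_lt_compat; lra).
    nra.
Qed.

Lemma series_abs (d c : nat -> R) : (forall n, Rabs (d n) <= c n) ->
  {l | Un_cv (fun n => sum_f_R0 c n) l} -> {l | Un_cv (fun n => sum_f_R0 d n) l}.
Proof.
  intros H [lc Hc].
  destruct (Rseries_CV_comp (fun n => Rabs (d n)) c) as [l1 H1].
  { intro n; split; [apply Rabs_pos| auto]. } { exists lc; auto. }
  destruct (Rseries_CV_comp (fun n => d n + Rabs (d n)) (fun n => 2 * c n)) as [l2 H2].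
  { intro n; specialize (H n); split; [|]; pose proof (Rle_abs (- d n)); rewrite Rabs_Ropp in H0;
    pose proof (Rle_abs (d n)); lra. }
  { exists (2 * lc). intros e he. destruct (CV_scal _ 2 _ Hc e he) as [N HN].
    exists N. intros n hn. replace (sum_f_R0 (fun n => 2 * c n) n) with (2 * sum_f_R0 c n).
    apply HN; auto. rewrite scal_sum; apply sum_ext; intros; ring. }
  exists (l2 - l1). intros e he.
  destruct (CV_plus _ _ _ _ H2 (CV_scal _ (-1) _ H1) e he) as [N HN].
  exists N. intros n hn. specialize (HN n hn).
  replace (sum_f_R0 d n) with (sum_f_R0 (fun n => d n + Rabs (d n)) n + -1 * sum_f_R0 (fun n => Rabs (d n)) n).
  - replace (l2 - l1) with (l2 + -1 * l1) by ring. auto.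
  - rewrite scal_sum, <- sum_plus. apply sum_ext; intros; ring.
Qed.

Lemma beta_eq s C N : (8 * INR N + 8) * beta s C N =
  8 * C * Rpower 2 s * / Rpower (INR N + 1) (2 * s - 1).
Proof.
  unfold beta. pose proof (pos_INR N).
  assert (E : Rpower (INR N + 1) (2 * s) = Rpower (INR N + 1) (2 * s - 1) * (INR N + 1)).
  { rewrite <- (Rpower_1 (INR N + 1)) at 3 by lra. rewrite <- Rpower_plus. f_equal; ring. }
  rewrite E.
  pose proof (Rpower_pos (INR N + 1) (2 * s - 1)). field. lra.
Qed.

Lemma dom_conv s C F : 1 < s -> Dom s C F -> exists L, conv F L.
Proof.
  intros hs hD.
  destruct (series_abs (fun N => sq_partial F (S N) - sq_partial F N)
      (fun N => 8 * C * Rpower 2 s * / Rpower (INR N + 1) (2 * s - 1))) as [l Hl].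
  { intro n. rewrite <- beta_eq. apply ring_bound; auto; lra. }
  { destruct (pser (2 * s - 1)) as [l0 Hl0]; [lra|].
    exists (8 * C * Rpower 2 s * l0). intros e he. destruct (CV_scal _ (8 * C * Rpower 2 s) _ Hl0 e he) as [N HN].
    exists N. intros n hn.
    replace (sum_f_R0 (fun i => 8 * C * Rpower 2 s * / Rpower (INR i + 1) (2 * s - 1)) n)
      with (8 * C * Rpower 2 s * sum_f_R0 (fun k => / Rpower (INR k + 1) (2 * s - 1)) n).
    apply HN; auto. rewrite scal_sum; apply sum_ext; intros; ring. }
  exists (sq_partial F 0 + l). intros e he. destruct (Hl e he) as [N HN].
  exists (S N). intros n hn. destruct n; [lia|].
  assert (E : sq_partial F (S n) = sq_partial F 0 + sum_f_R0 (fun N => sq_partial F (S N) - sq_partial F N) n).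
  { clear. induction n; simpl; [ring|]. rewrite <- Rplus_assoc, <- IHn. ring. }
  unfold Rdist. rewrite E. replace (sq_partial F 0 + sum_f_R0 (fun N => sq_partial F (S N) - sq_partial F N) n -
     (sq_partial F 0 + l)) with (sum_f_R0 (fun N => sq_partial F (S N) - sq_partial F N) n - l) by ring.
  apply HN. lia.
Qed.

Lemma sum_swap (f : nat -> nat -> R) n m :
  sum_f_R0 (fun i => sum_f_R0 (fun j => f i j) m) n =
  sum_f_R0 (fun j => sum_f_R0 (fun i => f i j) n) m.
Proof.
  induction n.
  - simpl. auto.
  - rewrite tech5, IHn. rewrite <- sum_plus. apply sum_ext; intros. rewrite tech5. auto.
Qed.

Lemma conv_swap F L : conv F L -> conv (fun m n => F n m) L.
Proof.
  intros H e he. destruct (H e he) as [N HN]. exists N. intros n hn.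
  replace (sq_partial (fun m n => F n m) n) with (sq_partial F n). auto.
  rewrite !sq_partial_eq. rewrite sum_swap. apply sum_ext; intros; apply sum_ext; intros.
  unfold Gz. rewrite andb_comm. auto.
Qed.

Lemma sum_refl (f : nat -> R) n : sum_f_R0 (fun j => f (n - j)%nat) n = sum_f_R0 f n.
Proof.
  revert f. induction n; intros f.
  - simpl. auto.
  - rewrite decomp_sum by lia. simpl Init.Nat.pred.
    replace (sum_f_R0 (fun i => f (S n - S i)%nat) n) with (sum_f_R0 (fun i => f (n - i)%nat) n)
      by (apply sum_ext; intros; f_equal).
    rewrite IHn. rewrite tech5. rewrite Nat.sub_0_r. ring.
Qed.

Lemma shift1 (h : nat -> R) n : sum_f_R0 (fun j => h (S j)) n = sum_f_R0 h n - h 0%nat + h (S n).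
Proof. induction n; simpl; [ring|]. rewrite IHn. ring. Qed.

Lemma shift_pos (g : Z -> R) N B k :
  (forall n, (Z.of_nat N + 1 <= Z.abs n + Z.of_nat k)%Z -> Rabs (g n) <= B) ->
  Rabs (sum_f_R0 (fun j => g (zi j N + Z.of_nat k)%Z) (2 * N) - sum_f_R0 (fun j => g (zi j N)) (2 * N))
    <= 2 * INR k * B.
Proof.
  induction k; intros H.
  - replace (sum_f_R0 (fun j => g (zi j N + Z.of_nat 0)%Z) (2 * N)) with (sum_f_R0 (fun j => g (zi j N)) (2 * N))
      by (apply sum_ext; intros; f_equal; lia).
    unfold Rminus. rewrite Rplus_opp_r, Rabs_R0. simpl. lra.
  - assert (IH := IHk (fun n hn => H n ltac:(lia))).
    replace (sum_f_R0 (fun j => g (zi j N + Z.of_nat (S k))%Z) (2 * N)) with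
      (sum_f_R0 (fun j => g (zi (S j) N + Z.of_nat k)%Z) (2 * N)) by (apply sum_ext; intros; f_equal; unfold zi; lia).
    rewrite (shift1 (fun j => g (zi j N + Z.of_nat k)%Z)).
    assert (H1 : Rabs (g (zi 0 N + Z.of_nat k)%Z) <= B) by (apply H; unfold zi; lia).
    assert (H2 : Rabs (g (zi (S (2 * N)) N + Z.of_nat k)%Z) <= B) by (apply H; unfold zi; lia).
    rewrite S_INR.
    match goal with |- Rabs (?a - ?b + ?c - ?d) <= _ =>
      replace (a - b + c - d) with ((a - d) - b + c) by ring end.
    eapply Rle_trans; [apply Rabs_triang|]. eapply Rle_trans; [apply Rplus_le_compat_r; apply Rabs_triang|].
    rewrite Rabs_Ropp. lra.
Qed.

Lemma shift_neg (g : Z -> R) N B k :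
  (forall n, (Z.of_nat N + 1 <= Z.abs n + Z.of_nat k)%Z -> Rabs (g n) <= B) ->
  Rabs (sum_f_R0 (fun j => g (zi j N - Z.of_nat k)%Z) (2 * N) - sum_f_R0 (fun j => g (zi j N)) (2 * N))
    <= 2 * INR k * B.
Proof.
  induction k; intros H.
  - replace (sum_f_R0 (fun j => g (zi j N - Z.of_nat 0)%Z) (2 * N)) with (sum_f_R0 (fun j => g (zi j N)) (2 * N))
      by (apply sum_ext; intros; f_equal; lia).
    unfold Rminus. rewrite Rplus_opp_r, Rabs_R0. simpl. lra.
  - assert (IH := IHk (fun n hn => H n ltac:(lia))).
    replace (sum_f_R0 (fun j => g (zi j N - Z.of_nat k)%Z) (2 * N)) with
      (sum_f_R0 (fun j => g (zi (S j) N - Z.of_nat (S k))%Z) (2 * N)) in IH by (apply sum_ext; intros; f_equal; unfold zi; lia).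
    rewrite (shift1 (fun j => g (zi j N - Z.of_nat (S k))%Z)) in IH.
    assert (H1 : Rabs (g (zi 0 N - Z.of_nat (S k))%Z) <= B) by (apply H; unfold zi; lia).
    assert (H2 : Rabs (g (zi (S (2 * N)) N - Z.of_nat (S k))%Z) <= B) by (apply H; unfold zi; lia).
    rewrite S_INR.
    match goal with H : Rabs (?a - ?b + ?c - ?d) <= _ |- Rabs (?a - ?d) <= _ =>
      replace (a - d) with ((a - b + c - d) + b - c) by ring end.
    eapply Rle_trans; [apply Rabs_triang|]. eapply Rle_trans; [apply Rplus_le_compat_r; apply Rabs_triang|].
    rewrite Rabs_Ropp. lra.
Qed.

Lemma shift_any (g : Z -> R) N B c :
  (forall n, (Z.of_nat N + 1 <= Z.abs n + Z.abs c)%Z -> Rabs (g n) <= B) ->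
  Rabs (sum_f_R0 (fun j => g (zi j N + c)%Z) (2 * N) - sum_f_R0 (fun j => g (zi j N)) (2 * N))
    <= 2 * IZR (Z.abs c) * B.
Proof.
  intro H. destruct (Z_le_gt_dec 0 c).
  - replace c with (Z.of_nat (Z.to_nat c)) by lia.
    replace (Z.abs (Z.of_nat (Z.to_nat c))) with (Z.of_nat (Z.to_nat c)) by lia. rewrite <- INR_IZR_INZ.
    apply shift_pos. intros n hn; apply H; lia.
  - replace c with (- Z.of_nat (Z.to_nat (- c)))%Z by lia.
    replace (Z.abs (- Z.of_nat (Z.to_nat (- c)))) with (Z.of_nat (Z.to_nat (- c))) by lia. rewrite <- INR_IZR_INZ.
    replace (sum_f_R0 (fun j => g (zi j N + - Z.of_nat (Z.to_nat (- c)))%Z) (2 * N)) with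
      (sum_f_R0 (fun j => g (zi j N - Z.of_nat (Z.to_nat (- c)))%Z) (2 * N)) by (apply sum_ext; intros; f_equal; lia).
    apply shift_neg. intros n hn; apply H; lia.
Qed.

Lemma half_spec N : (2 * (N / 2) <= N /\ N <= 2 * (N/2) + 1)%nat.
Proof. pose proof (Nat.div_mod N 2 ltac:(lia)). pose proof (Nat.mod_upper_bound N 2 ltac:(lia)). lia. Qed.

Lemma sum_minus (f g : nat -> R) n : sum_f_R0 (fun i => f i - g i) n = sum_f_R0 f n - sum_f_R0 g n.
Proof. induction n; simpl; [ring|]. rewrite IHn; ring. Qed.

Lemma tau_diff s C F N K : 0 < s -> Dom s C F -> (2 * K <= N)%nat ->
  Rabs (sq_partial (fun m n => F m (- m - n)%Z) N - sq_partial F N) <=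
  INR (S (2 * N)) * (2 * INR N * beta s C K).
Proof.
  intros hs hD hK. rewrite !sq_partial_eq.
  assert (E : forall i, sum_f_R0 (fun j => Gz (fun m n => F m (- m - n)%Z) (zi i N) (zi j N)) (2 * N) =
     sum_f_R0 (fun j => Gz F (zi i N) (zi j N + - zi i N)%Z) (2 * N)).
  { intro i. rewrite <- (sum_refl (fun j => Gz (fun m n => F m (- m - n)%Z) (zi i N) (zi j N))).
    apply sum_ext; intros j hj. unfold Gz.
    replace (zi (2 * N - j) N) with (- (zi j N))%Z by (unfold zi; lia).
    destruct (Z.eqb_spec (zi i N) 0); destruct (Z.eqb_spec (- zi j N) 0);
    destruct (Z.eqb_spec (zi j N + - zi i N) 0); simpl; auto; try (exfalso; lia); f_equal; lia. }
  rewrite (sum_ext _ _ _ (fun i _ => E i)).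
  rewrite <- sum_minus. apply sum_bound. intros i hi.
  set (m := zi i N).
  eapply Rle_trans; [apply (shift_any (Gz F m) N (beta s C K) (- m)%Z)|].
  - intros n hn. apply term_bound; auto. lia.
  - assert (IZR (Z.abs (- m)) <= INR N).
    { rewrite INR_IZR_INZ. apply IZR_le. unfold m, zi. lia. }
    pose proof (beta_nonneg s C K (proj1 hD)). nra.
Qed.

Lemma rpow_small a e : 0 < a -> 0 < e -> exists K0, forall K, (K0 <= K)%nat -> / Rpower (INR K + 1) a < e.
Proof.
  intros ha he. set (X := Rpower (/ e) (/ a)).
  destruct (INR_archimed 1 X) as [K0 HK0]; [lra|]. exists K0. intros K hK.
  apply le_INR in hK. assert (hX : 0 < X) by apply Rpower_pos.
  assert (Rpower X a < Rpower (INR K + 1) a) by (apply Rlt_Rpower_l; lra).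
  unfold X in H. rewrite Rpower_mult in H. rewrite Rinv_l in H by lra.
  rewrite Rpower_1 in H by (apply Rinv_0_lt_compat; auto).
  rewrite <- (Rinv_inv e). apply Rinv_lt_contravar; auto.
  apply Rmult_lt_0_compat; [apply Rinv_0_lt_compat; auto| apply Rpower_pos].
Qed.

Lemma beta_sq s C K : 16 * (INR K + 1) ^ 2 * beta s C K =
  16 * C * Rpower 2 s * / Rpower (INR K + 1) (2 * s - 2).
Proof.
  unfold beta. pose proof (pos_INR K).
  assert (E : Rpower (INR K + 1) (2 * s) = Rpower (INR K + 1) (2 * s - 2) * (INR K + 1) ^ 2).
  { rewrite <- (Rpower_pow 2 (INR K + 1)) by lra. rewrite <- Rpower_plus. f_equal. simpl. ring. }
  rewrite E. pose proof (Rpower_pos (INR K + 1) (2 * s - 2)). field. lra.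
Qed.

Lemma conv_tau s C F L : 1 < s -> Dom s C F -> conv F L -> conv (fun m n => F m (- m - n)%Z) L.
Proof.
  intros hs hD HF e he.
  set (M := 16 * C * Rpower 2 s).
  assert (hM : 0 <= M) by (unfold M; pose proof (Rpower_pos 2 s); pose proof (proj1 hD); nra).
  destruct (rpow_small (2 * s - 2) (e / 2 / (M + 1))) as [K0 HK0]; [lra| apply Rdiv_lt_0_compat; lra|].
  destruct (HF (e / 2)) as [N1 HN1]; [lra|].
  exists (max N1 (2 * K0 + 2)). intros N hN.
  set (K := (N / 2)%nat). destruct (half_spec N) as [h1 h2]. fold K in h1, h2.
  assert (hK : (K0 <= K)%nat) by lia.
  pose proof (tau_diff s C F N K ltac:(lra) hD h1).
  specialize (HN1 N ltac:(lia)). specialize (HK0 K hK).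
  assert (B : INR (S (2 * N)) * (2 * INR N * beta s C K) <= M * / Rpower (INR K + 1) (2 * s - 2)).
  { unfold M. rewrite <- beta_sq. pose proof (beta_nonneg s C K (proj1 hD)).
    assert (INR N <= 2 * INR K + 1).
    { replace 2 with (INR 2) by (simpl; ring). rewrite <- mult_INR, <- S_INR. apply le_INR. lia. }
    rewrite S_INR, mult_INR. replace (INR 2) with 2 by (simpl; ring). pose proof (pos_INR N). pose proof (pos_INR K).
    replace ((2 * INR N + 1) * (2 * INR N * beta s C K)) with (((2 * INR N + 1) * (2 * INR N)) * beta s C K) by ring.
    apply Rmult_le_compat_r; auto. nra. }
  assert (M * / Rpower (INR K + 1) (2 * s - 2) < e / 2).
  { pose proof (Rpower_pos (INR K + 1) (2 * s - 2)).
    assert (0 < / Rpower (INR K + 1) (2 * s - 2)) by (apply Rinv_0_lt_compat; auto).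
    apply Rle_lt_trans with ((M + 1) * / Rpower (INR K + 1) (2 * s - 2)); [nra|].
    replace (e / 2) with ((M + 1) * (e / 2 / (M + 1))) by (field; lra).
    apply Rmult_lt_compat_l; lra. }
  unfold Rdist in *.
  replace (sq_partial (fun m n => F m (- m - n)%Z) N - L) with
    ((sq_partial (fun m n => F m (- m - n)%Z) N - sq_partial F N) + (sq_partial F N - L)) by ring.
  eapply Rle_lt_trans; [apply Rabs_triang|]. lra.
Qed.

Definition rot (F : Z -> Z -> R) := fun m n => F n (- n - m)%Z.

Lemma Pz_rot m n : Pz n (- n - m)%Z = Pz m n.
Proof. unfold Pz. rewrite minus_IZR, opp_IZR. ring. Qed.

Lemma nz_rot m n : (m, n) <> (0%Z, 0%Z) -> (n, (- n - m)%Z) <> (0%Z, 0%Z).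
Proof. intros H E. inversion E. apply H. f_equal; lia. Qed.

Lemma dom_rot s C F : Dom s C F -> Dom s C (rot F).
Proof.
  intros [hC H]. split; auto. intros m n hmn. unfold rot.
  rewrite <- Pz_rot. apply H. apply nz_rot; auto.
Qed.

Lemma conv_rot s C F L : 1 < s -> Dom s C F -> conv F L -> conv (rot F) L.
Proof.
  intros hs hD hF. apply (conv_swap (fun m n => F m (- m - n)%Z)).
  apply (conv_tau s C); auto.
Qed.

Lemma Rpower_plus_nat x s j : 0 < x -> Rpower x (s + INR j) = Rpower x s * x ^ j.
Proof. intro. rewrite Rpower_plus, Rpower_pow; auto. Qed.

Lemma avg_lemma s (j : nat) D c T (f : Z -> Z -> R) : 1 < s -> 0 <= D ->
  (forall m n, Rabs (f m n) <= D * Pz m n ^ j) ->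
  (forall m n, f m n + f n (- n - m)%Z + f (- n - m)%Z m = c * Pz m n ^ j) ->
  conv (fun m n => 1 / Rpower (Pz m n) s) T ->
  conv (fun m n => f m n / Rpower (Pz m n) (s + INR j)) (c / 3 * T).
Proof.
  intros hs hD hb hsum hT.
  set (F := fun m n => f m n / Rpower (Pz m n) (s + INR j)).
  assert (DF : Dom s D F).
  { split; auto. intros m n hmn. unfold F. pose proof (Pz_pos m n hmn) as hP.
    rewrite Rpower_plus_nat by auto. pose proof (Rpower_pos (Pz m n) s).
    pose proof (pow_lt _ j hP).
    unfold Rdiv. rewrite Rabs_mult, Rabs_inv, (Rabs_pos_eq (Rpower (Pz m n) s * Pz m n ^ j)) by nra.
    rewrite Rinv_mult. specialize (hb m n).
    apply Rle_trans with (D * Pz m n ^ j * (/ Rpower (Pz m n) s * / Pz m n ^ j)).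
    - apply Rmult_le_compat_r; auto. left. apply Rmult_lt_0_compat; apply Rinv_0_lt_compat; auto.
    - right. field. split; apply Rgt_not_eq; auto. }
  destruct (dom_conv s D F hs DF) as [L HL].
  assert (H1 := conv_rot s D F L hs DF HL).
  assert (H2 := conv_rot s D (rot F) L hs (dom_rot _ _ _ DF) H1).
  assert (H3 := conv_lin 1 1 _ _ _ _ (conv_lin 1 1 _ _ _ _ HL H1) H2).
  assert (H4 : conv (fun m n => c * (1 / Rpower (Pz m n) s) + 0 * 0) (c * T + 0 * 0)).
  { apply conv_lin; auto. intros e he; exists 0%nat; intros. rewrite sq_partial_eq.
    rewrite sum_eq_R0. unfold Rdist. rewrite Rminus_diag, Rabs_R0. lra.
    intros; apply sum_eq_R0; intros. unfold Gz. destruct (_ && _)%bool; auto. }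
  apply (conv_ext _ (fun m n => c * (1 / Rpower (Pz m n) s) + 0 * 0)) in H3.
  2: { intros m n hmn. unfold rot, F. rewrite !Pz_rot.
       replace (- (- n - m) - n)%Z with m by lia.
       pose proof (Pz_pos m n hmn) as hP. rewrite Rpower_plus_nat by auto.
       pose proof (Rpower_pos (Pz m n) s). pose proof (pow_lt _ j hP).
       specialize (hsum m n).
       replace (1 * (1 * (f m n / (Rpower (Pz m n) s * Pz m n ^ j)) +
          1 * (f n (- n - m)%Z / (Rpower (Pz m n) s * Pz m n ^ j))) +
          1 * (f (- n - m)%Z m / (Rpower (Pz m n) s * Pz m n ^ j)))
       with ((f m n + f n (- n - m)%Z + f (- n - m)%Z m) / (Rpower (Pz m n) s * Pz m n ^ j))
         by (field; split; apply Rgt_not_eq; auto).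
       rewrite hsum.
       field. split; apply Rgt_not_eq; auto. }
  pose proof (conv_unique _ _ _ H3 H4).
  replace (c / 3 * T) with L by lra. exact HL.
Qed.

Definition Tsum s := lattice_sum (fun m n => 1 / Rpower (Pz m n) s).

Lemma conv_T s : 1 < s -> conv (fun m n => 1 / Rpower (Pz m n) s) (Tsum s).
Proof.
  intro hs. assert (D : Dom s 1 (fun m n => 1 / Rpower (Pz m n) s)).
  { split; [lra|]. intros. rewrite Rabs_pos_eq; [lra|]. left; apply Rdiv_lt_0_compat; [lra|apply Rpower_pos]. }
  destruct (dom_conv _ _ _ hs D) as [L HL]. unfold Tsum. rewrite (lattice_sum_eq _ _ HL). auto.
Qed.

Definition ell (m n : Z) := (IZR m + IZR n / 2) * IZR n.

Lemma Pz_ge0 m n : 0 <= Pz m n.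
Proof. pose proof (Pz_lower m n). pose proof (pow2_ge_0 (IZR m)). pose proof (pow2_ge_0 (IZR n)). lra. Qed.

Lemma ell_bound m n : Rabs (ell m n) <= 1 * Pz m n ^ 1.
Proof.
  unfold ell, Pz. apply Rabs_le. pose proof (pow2_ge_0 (IZR m + IZR n)). pose proof (pow2_ge_0 (IZR n)).
  pose proof (pow2_ge_0 (IZR m)). simpl in *. split; nra.
Qed.

Lemma n2_bound m n : 0 <= IZR n ^ 2 <= 2 * Pz m n.
Proof.
  unfold Pz. pose proof (pow2_ge_0 (IZR m + IZR n)). pose proof (pow2_ge_0 (IZR n)).
  pose proof (pow2_ge_0 (IZR m)). simpl in *. split; nra.
Qed.

Lemma m2_bound m n : 0 <= IZR m ^ 2 <= 2 * Pz m n.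
Proof.
  unfold Pz. pose proof (pow2_ge_0 (IZR m + IZR n)). pose proof (pow2_ge_0 (IZR n)).
  pose proof (pow2_ge_0 (IZR m)). simpl in *. split; nra.
Qed.

Ltac zring := rewrite ?minus_IZR, ?opp_IZR; unfold ell, Pz; rewrite ?minus_IZR, ?opp_IZR; field.

Lemma Bsum1 s : 1 < s -> conv (fun m n => ell m n / Rpower (Pz m n) (s + INR 1)) (0 / 3 * Tsum s).
Proof.
  intro hs. apply (avg_lemma s 1 1); auto; [lra| apply ell_bound | intros; zring | apply conv_T; auto].
Qed.

Lemma Bsum2 s : 1 < s -> conv (fun m n => IZR n ^ 2 / Rpower (Pz m n) (s + INR 1)) (2 / 3 * Tsum s).
Proof.
  intro hs. apply (avg_lemma s 1 2); auto; [lra| | intros; zring | apply conv_T; auto].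
  intros. pose proof (n2_bound m n). rewrite Rabs_pos_eq; lra.
Qed.

Lemma Bsum3 s : 1 < s -> conv (fun m n => ell m n ^ 2 / Rpower (Pz m n) (s + INR 2)) (1 / 2 / 3 * Tsum s).
Proof.
  intro hs. apply (avg_lemma s 2 1); auto; [lra| | intros; zring | apply conv_T; auto].
  intros. pose proof (ell_bound m n). rewrite Rabs_pos_eq by apply pow2_ge_0.
  rewrite <- (pow2_abs (ell m n)). pose proof (Rabs_pos (ell m n)). pose proof (Pz_ge0 m n). simpl in *. nra.
Qed.

Lemma Bsum4 s : 1 < s -> conv (fun m n => ell m n * IZR n ^ 2 / Rpower (Pz m n) (s + INR 2)) (0 / 3 * Tsum s).
Proof.
  intro hs. apply (avg_lemma s 2 2); auto; [lra| | intros; zring | apply conv_T; auto].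
  intros. pose proof (ell_bound m n). pose proof (n2_bound m n). rewrite Rabs_mult.
  rewrite (Rabs_pos_eq (IZR n ^ 2)) by lra. pose proof (Rabs_pos (ell m n)). pose proof (Pz_ge0 m n). simpl in *. nra.
Qed.

Lemma Bsum5 s : 1 < s -> conv (fun m n => IZR n ^ 4 / Rpower (Pz m n) (s + INR 2)) (2 / 3 * Tsum s).
Proof.
  intro hs. apply (avg_lemma s 2 4); auto; [lra| | intros; zring | apply conv_T; auto].
  intros. pose proof (n2_bound m n). replace (IZR n ^ 4) with ((IZR n ^ 2) ^ 2) by ring.
  rewrite Rabs_pos_eq by apply pow2_ge_0. simpl in *. nra.
Qed.

Lemma Bsum6 s : 1 < s -> conv (fun m n => IZR m ^ 4 / Rpower (Pz m n) (s + INR 2)) (2 / 3 * Tsum s).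
Proof.
  intro hs. apply (avg_lemma s 2 4); auto; [lra| | intros; zring | apply conv_T; auto].
  intros. pose proof (m2_bound m n). replace (IZR m ^ 4) with ((IZR m ^ 2) ^ 2) by ring.
  rewrite Rabs_pos_eq by apply pow2_ge_0. simpl in *. nra.
Qed.

Lemma S1_eq s : 1 < s -> S1 (s + 2) = 2 / 3 * Tsum s.
Proof.
  intro hs. unfold S1. apply lattice_sum_eq.
  eapply conv_ext; [|apply (Bsum6 s hs)]. intros. unfold Pz. replace (INR 2) with 2 by (simpl; ring). auto.
Qed.

Lemma sum_ge_term (f : nat -> R) k n : (forall i, 0 <= f i) -> (k <= n)%nat -> f k <= sum_f_R0 f n.
Proof.
  intros H hk. induction n.
  - replace k with 0%nat by lia. simpl; lra.
  - rewrite tech5. destruct (Nat.eq_dec k (S n)).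
    + subst. pose proof (cond_pos_sum f n H). lra.
    + pose proof (H (S n)). pose proof (IHn ltac:(lia)). lra.
Qed.

Lemma Tsum_pos s : 1 < s -> 0 < Tsum s.
Proof.
  intro hs. pose proof (conv_T s hs) as H.
  set (F := fun m n => 1 / Rpower (Pz m n) s).
  assert (hG : forall m n, 0 <= Gz F m n).
  { intros; unfold Gz, F. destruct (_ && _)%bool; [lra|]. left; apply Rdiv_lt_0_compat; [lra|apply Rpower_pos]. }
  assert (G : Un_growing (sq_partial F)).
  { intro N. pose proof (ring_decomp F N). unfold Row in H0.
    assert (forall m, 0 <= sum_f_R0 (fun j => Gz F m (zi j (S N))) (2 * S N)) by (intros; apply cond_pos_sum; auto).
    assert (0 <= sum_f_R0 (fun i => Gz F (zi i N) (- (Z.of_nat N + 1))%Z + Gz F (zi i N) (Z.of_nat N + 1)%Z) (2 * N)).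
    { apply cond_pos_sum. intros. pose proof (hG (zi n N) (- (Z.of_nat N + 1))%Z). pose proof (hG (zi n N) (Z.of_nat N + 1)%Z). lra. }
    pose proof (H1 (- (Z.of_nat N + 1))%Z). pose proof (H1 (Z.of_nat N + 1)%Z). lra. }
  pose proof (growing_ineq _ _ G H 1%nat).
  assert (1 <= sq_partial F 1).
  { rewrite sq_partial_eq. eapply Rle_trans; [|apply (sum_ge_term _ 2%nat); [intros; apply cond_pos_sum; auto|lia]].
    eapply Rle_trans; [|apply (sum_ge_term _ 1%nat); [intros; apply hG|lia]].
    unfold Gz, zi, F. simpl. unfold Pz. simpl. replace (1 * (1 * 1) + 1 * 0 + 0 * (0 * 1)) with 1 by ring.
    rewrite Rpower_1_base. lra. }
  lra.
Qed.

Lemma Rpower_pos' x y : 0 < Rpower x y.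
Proof. unfold Rpower; apply exp_pos. Qed.

Lemma Rpower_1_base' q : Rpower 1 q = 1.
Proof. unfold Rpower. rewrite ln_1, Rmult_0_r, exp_0. auto. Qed.

Lemma dpow b t : -1 < t -> is_derive (fun t => Rpower (1 + t) b) t (b * Rpower (1 + t) (b - 1)).
Proof.
  intro ht. apply is_derive_Reals.
  replace (b * Rpower (1 + t) (b - 1)) with ((b * Rpower (1 + t) (b - 1)) * 1) by ring.
  apply (derivable_pt_lim_comp (fun t => 1 + t) (fun x => Rpower x b)).
  - apply is_derive_Reals. auto_derive; auto; try ring.
  - apply derivable_pt_lim_power. lra.
Qed.

Lemma dR c b p0 p1 p2 t : -1 < t ->
  derivable_pt_lim (fun t => c * Rpower (1 + t) b + p0 + p1 * t + p2 * t ^ 2) t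
    (c * (b * Rpower (1 + t) (b - 1)) + p1 + 2 * p2 * t).
Proof.
  intro ht. apply is_derive_Reals.
  apply (is_derive_ext (fun t => c * Rpower (1 + t) b + (p0 + p1 * t + p2 * t ^ 2))).
  { intro; simpl; ring. }
  replace (c * (b * Rpower (1 + t) (b - 1)) + p1 + 2 * p2 * t) with
    (c * (b * Rpower (1 + t) (b - 1)) + (p1 + 2 * p2 * t)) by ring.
  apply (is_derive_plus (fun t => c * Rpower (1 + t) b) (fun t => p0 + p1 * t + p2 * t ^ 2)).
  - apply (is_derive_scal (fun t => Rpower (1 + t) b)). apply dpow; auto.
  - auto_derive; auto; try ring.
Qed.

Lemma mvt_step (g g' : R -> R) K k : 0 <= K ->
  (forall x, -1/2 <= x <= 1/2 -> derivable_pt_lim g x (g' x)) -> g 0 = 0 ->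
  (forall x, -1/2 <= x <= 1/2 -> Rabs (g' x) <= K * Rabs x ^ k) ->
  forall t, -1/2 <= t <= 1/2 -> Rabs (g t) <= K * Rabs t ^ (S k).
Proof.
  intros hK hd h0 hb t ht.
  destruct (Rtotal_order t 0) as [hlt|[heq|hgt]].
  - destruct (MVT_cor2 g g' t 0 hlt) as [c [Hc1 Hc2]]. { intros; apply hd; lra. }
    rewrite h0 in Hc1. replace (g t) with (- (g' c * (0 - t))) by lra.
    rewrite Rabs_Ropp, Rabs_mult. specialize (hb c ltac:(lra)).
    replace (0 - t) with (- t) by ring. rewrite Rabs_Ropp.
    assert (Rabs c ^ k <= Rabs t ^ k).
    { apply pow_incr. split; [apply Rabs_pos|]. rewrite !Rabs_left; lra. }
    assert (Rabs (g' c) <= K * Rabs t ^ k) by (eapply Rle_trans; [exact hb| apply Rmult_le_compat_l; auto]).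
    apply Rle_trans with (K * Rabs t ^ k * Rabs t); [apply Rmult_le_compat_r; auto; apply Rabs_pos | right; simpl; ring].
  - subst. rewrite h0, Rabs_R0. simpl. nra.
  - destruct (MVT_cor2 g g' 0 t hgt) as [c [Hc1 Hc2]]. { intros; apply hd; lra. }
    rewrite h0 in Hc1. replace (g t) with (g' c * (t - 0)) by lra.
    rewrite Rabs_mult. specialize (hb c ltac:(lra)).
    replace (t - 0) with t by ring.
    assert (Rabs c ^ k <= Rabs t ^ k).
    { apply pow_incr. split; [apply Rabs_pos|]. rewrite !Rabs_right; lra. }
    assert (Rabs (g' c) <= K * Rabs t ^ k) by (eapply Rle_trans; [exact hb| apply Rmult_le_compat_l; auto]).
    apply Rle_trans with (K * Rabs t ^ k * Rabs t); [apply Rmult_le_compat_r; auto; apply Rabs_pos | right; simpl; ring].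
Qed.

Lemma rpow_bound b x : 1/2 <= x <= 3/2 -> Rpower x b <= Rpower (1/2) b + Rpower (3/2) b.
Proof.
  intro hx. pose proof (Rpower_pos' (1/2) b). pose proof (Rpower_pos' (3/2) b).
  destruct (Rle_dec 0 b).
  - assert (Rpower x b <= Rpower (3/2) b) by (apply Rle_Rpower_l; lra). lra.
  - assert (Rpower (1/2) (- b) <= Rpower x (- b)) by (apply Rle_Rpower_l; lra).
    rewrite !Rpower_Ropp in H1.
    assert (Rpower x b <= Rpower (1/2) b).
    { rewrite <- (Rinv_inv (Rpower x b)), <- (Rinv_inv (Rpower (1/2) b)).
      apply Rinv_le_contravar; auto. apply Rinv_0_lt_compat; auto. }
    lra.
Qed.

Lemma taylor2 a : exists K, 0 <= K /\ forall t, -1/2 <= t <= 1/2 ->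
  Rabs (Rpower (1 + t) a - (1 + a * t + a * (a - 1) / 2 * t ^ 2)) <= K * Rabs t ^ 3.
Proof.
  set (K := Rabs (a * (a - 1) * (a - 2)) * (Rpower (1/2) (a - 3) + Rpower (3/2) (a - 3))).
  assert (hK : 0 <= K).
  { unfold K. pose proof (Rpower_pos' (1/2) (a-3)). pose proof (Rpower_pos' (3/2) (a-3)).
    pose proof (Rabs_pos (a * (a - 1) * (a - 2))). nra. }
  exists K. split; auto.
  assert (H2 : forall t, -1/2 <= t <= 1/2 ->
    Rabs (a * (a - 1) * Rpower (1 + t) (a - 2) + - (a * (a - 1)) + 0 * t + 0 * t ^ 2) <= K * Rabs t ^ 1).
  { apply (mvt_step _ (fun t => a * (a - 1) * (a - 2) * Rpower (1 + t) (a - 3)) K 0 hK).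
    - intros x hx. pose proof (dR (a * (a - 1)) (a - 2) (- (a * (a - 1))) 0 0 x ltac:(lra)).
      replace (a - 2 - 1) with (a - 3) in H by ring.
      replace (a * (a - 1) * (a - 2) * Rpower (1 + x) (a - 3)) with
        (a * (a - 1) * ((a - 2) * Rpower (1 + x) (a - 3)) + 0 + 2 * 0 * x) by ring. auto.
    - rewrite Rplus_0_r, Rpower_1_base'. ring.
    - intros x hx. simpl. rewrite Rmult_1_r. unfold K. rewrite Rabs_mult.
      rewrite (Rabs_pos_eq (Rpower _ _)) by (left; apply Rpower_pos').
      apply Rmult_le_compat_l; [apply Rabs_pos|]. apply rpow_bound. lra. }
  assert (H1 : forall t, -1/2 <= t <= 1/2 ->
    Rabs (a * Rpower (1 + t) (a - 1) + - a + - (a * (a - 1)) * t + 0 * t ^ 2) <= K * Rabs t ^ 2).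
  { apply (mvt_step _ (fun t => a * (a - 1) * Rpower (1 + t) (a - 2) + - (a * (a - 1)) + 0 * t + 0 * t ^ 2) K 1 hK); auto.
    - intros x hx. pose proof (dR a (a - 1) (- a) (- (a * (a - 1))) 0 x ltac:(lra)).
      replace (a - 1 - 1) with (a - 2) in H by ring.
      replace (a * (a - 1) * Rpower (1 + x) (a - 2) + - (a * (a - 1)) + 0 * x + 0 * x ^ 2) with
        (a * ((a - 1) * Rpower (1 + x) (a - 2)) + - (a * (a - 1)) + 2 * 0 * x) by ring. auto.
    - rewrite Rplus_0_r, Rpower_1_base'. ring. }
  assert (H0 : forall t, -1/2 <= t <= 1/2 ->
    Rabs (1 * Rpower (1 + t) a + - 1 + - a * t + - (a * (a - 1) / 2) * t ^ 2) <= K * Rabs t ^ 3).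
  { apply (mvt_step _ (fun t => a * Rpower (1 + t) (a - 1) + - a + - (a * (a - 1)) * t + 0 * t ^ 2) K 2 hK); auto.
    - intros x hx. pose proof (dR 1 a (- 1) (- a) (- (a * (a - 1) / 2)) x ltac:(lra)).
      replace (a * Rpower (1 + x) (a - 1) + - a + - (a * (a - 1)) * x + 0 * x ^ 2) with
        (1 * (a * Rpower (1 + x) (a - 1)) + - a + 2 * - (a * (a - 1) / 2) * x) by field. auto.
    - rewrite Rplus_0_r, Rpower_1_base'. ring. }
  intros t ht. specialize (H0 t ht).
  replace (Rpower (1 + t) a - (1 + a * t + a * (a - 1) / 2 * t ^ 2)) with
    (1 * Rpower (1 + t) a + - 1 + - a * t + - (a * (a - 1) / 2) * t ^ 2) by ring. auto.
Qed.

Lemma abs_mul_le A B a b : Rabs A <= a -> Rabs B <= b -> Rabs (A * B) <= a * b.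
Proof. intros. rewrite Rabs_mult. apply Rmult_le_compat; auto; apply Rabs_pos. Qed.

Lemma prod3 X1 X2 X3 Y1 Y2 Y3 M p : 0 <= p <= 1 -> 1 <= M ->
  Rabs X1 <= M * p -> Rabs X2 <= M * p ^ 2 -> Rabs X3 <= M * p ^ 3 ->
  Rabs Y1 <= M * p -> Rabs Y2 <= M * p ^ 2 -> Rabs Y3 <= M * p ^ 3 ->
  Rabs ((1 + X1 + X2 + X3) * (1 + Y1 + Y2 + Y3) - (1 + X1 + X2 + Y1 + Y2 + X1 * Y1)) <= 10 * M ^ 2 * p ^ 3.
Proof.
  intros hp hM h1 h2 h3 g1 g2 g3.
  replace ((1 + X1 + X2 + X3) * (1 + Y1 + Y2 + Y3) - (1 + X1 + X2 + Y1 + Y2 + X1 * Y1)) with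
    (X3 + Y3 + X1 * Y2 + X2 * Y1 + X1 * Y3 + X3 * Y1 + X2 * Y2 + X2 * Y3 + X3 * Y2 + X3 * Y3) by ring.
  assert (p3 : 0 <= p ^ 3) by (apply pow_le; lra).
  assert (p4 : p ^ 4 <= p ^ 3) by (replace (p ^ 4) with (p ^ 3 * p) by ring; nra).
  assert (p5 : p ^ 5 <= p ^ 3) by (replace (p ^ 5) with (p ^ 3 * (p * p)) by ring; assert (p * p <= 1) by nra; nra).
  assert (p6 : p ^ 6 <= p ^ 3) by (replace (p ^ 6) with (p ^ 3 * (p * p * p)) by ring; assert (p * p * p <= 1) by nra; nra).
  assert (MM : M <= M ^ 2) by nra.
  assert (M3 : M * p ^ 3 <= M ^ 2 * p ^ 3) by nra.
  pose proof (abs_mul_le _ _ _ _ h1 g2). pose proof (abs_mul_le _ _ _ _ h2 g1).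
  pose proof (abs_mul_le _ _ _ _ h1 g3). pose proof (abs_mul_le _ _ _ _ h3 g1).
  pose proof (abs_mul_le _ _ _ _ h2 g2). pose proof (abs_mul_le _ _ _ _ h2 g3).
  pose proof (abs_mul_le _ _ _ _ h3 g2). pose proof (abs_mul_le _ _ _ _ h3 g3).
  assert (e1 : M * p * (M * p ^ 2) = M ^ 2 * p ^ 3) by ring.
  assert (e2 : M * p ^ 2 * (M * p) = M ^ 2 * p ^ 3) by ring.
  assert (e3 : M * p * (M * p ^ 3) = M ^ 2 * p ^ 4) by ring.
  assert (e4 : M * p ^ 3 * (M * p) = M ^ 2 * p ^ 4) by ring.
  assert (e5 : M * p ^ 2 * (M * p ^ 2) = M ^ 2 * p ^ 4) by ring.
  assert (e6 : M * p ^ 2 * (M * p ^ 3) = M ^ 2 * p ^ 5) by ring.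
  assert (e7 : M * p ^ 3 * (M * p ^ 2) = M ^ 2 * p ^ 5) by ring.
  assert (e8 : M * p ^ 3 * (M * p ^ 3) = M ^ 2 * p ^ 6) by ring.
  assert (q4 : M ^ 2 * p ^ 4 <= M ^ 2 * p ^ 3) by (apply Rmult_le_compat_l; [nra|auto]).
  assert (q5 : M ^ 2 * p ^ 5 <= M ^ 2 * p ^ 3) by (apply Rmult_le_compat_l; [nra|auto]).
  assert (q6 : M ^ 2 * p ^ 6 <= M ^ 2 * p ^ 3) by (apply Rmult_le_compat_l; [nra|auto]).
  pose proof (Rabs_triang (X3) (Y3)).
  pose proof (Rabs_triang (X3 + Y3) (X1 * Y2)).
  pose proof (Rabs_triang (X3 + Y3 + X1 * Y2) (X2 * Y1)).
  pose proof (Rabs_triang (X3 + Y3 + X1 * Y2 + X2 * Y1) (X1 * Y3)).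
  pose proof (Rabs_triang (X3 + Y3 + X1 * Y2 + X2 * Y1 + X1 * Y3) (X3 * Y1)).
  pose proof (Rabs_triang (X3 + Y3 + X1 * Y2 + X2 * Y1 + X1 * Y3 + X3 * Y1) (X2 * Y2)).
  pose proof (Rabs_triang (X3 + Y3 + X1 * Y2 + X2 * Y1 + X1 * Y3 + X3 * Y1 + X2 * Y2) (X2 * Y3)).
  pose proof (Rabs_triang (X3 + Y3 + X1 * Y2 + X2 * Y1 + X1 * Y3 + X3 * Y1 + X2 * Y2 + X2 * Y3) (X3 * Y2)).
  pose proof (Rabs_triang (X3 + Y3 + X1 * Y2 + X2 * Y1 + X1 * Y3 + X3 * Y1 + X2 * Y2 + X2 * Y3 + X3 * Y2) (X3 * Y3)).
  lra.
Qed.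


Lemma abs_bounds x a : Rabs x <= a -> - a <= x <= a.
Proof. intro H. pose proof (Rle_abs x). pose proof (Rle_abs (- x)). rewrite Rabs_Ropp in H1. lra. Qed.

Definition r0 := sqrt 3 / 2.

Lemma r0_sq : r0 * r0 = 3 / 4.
Proof. unfold r0. replace (sqrt 3 / 2 * (sqrt 3 / 2)) with (sqrt 3 * sqrt 3 / 4) by field.
  rewrite sqrt_sqrt; lra. Qed.

Lemma r0_pos : 0 < r0.
Proof. unfold r0. assert (0 < sqrt 3) by (apply sqrt_lt_R0; lra). lra. Qed.

Lemma r0_bounds : 1/2 < r0 < 1.
Proof. pose proof r0_sq. pose proof r0_pos. split; nra. Qed.

Definition Qp u v m n := 1 / (r0 + v) * (IZR m + (1/2 + u) * IZR n) ^ 2 + (r0 + v) * IZR n ^ 2.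

Definition dlt v := v / r0.
Definition alp u v m n := (2 * ell m n * u + 2 * r0 * IZR n ^ 2 * v) / Pz m n.
Definition bet u v m n := IZR n ^ 2 * (u ^ 2 + v ^ 2) / Pz m n.

Definition Mk s u v m n :=
  Rpower r0 s / Rpower (Pz m n) s *
  (1 + s * dlt v + s * (s - 1) / 2 * dlt v ^ 2 + (- s) * alp u v m n +
   ((- s) * bet u v m n + (- s) * (- s - 1) / 2 * alp u v m n ^ 2) + s * dlt v * ((- s) * alp u v m n)).

Lemma Qp_eq u v m n : (m, n) <> (0%Z, 0%Z) -> Rabs v <= 1/10 ->
  Qp u v m n = Pz m n * (1 + (alp u v m n + bet u v m n)) / (r0 * (1 + dlt v)).
Proof.
  intros hmn hv. pose proof (Pz_pos m n hmn). pose proof r0_sq. pose proof r0_bounds.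
  assert (r0 + v <> 0) by (apply abs_bounds in hv; lra).
  unfold Qp, alp, bet, dlt, ell.
  replace (r0 * (1 + v / r0)) with (r0 + v) by (field; lra).
  assert (E : (IZR m + (1 / 2 + u) * IZR n) ^ 2 + (r0 + v) ^ 2 * IZR n ^ 2 =
     Pz m n + (2 * ((IZR m + IZR n / 2) * IZR n) * u + 2 * r0 * IZR n ^ 2 * v) + IZR n ^ 2 * (u ^ 2 + v ^ 2)).
  { unfold Pz. replace ((r0 + v) ^ 2) with (r0 * r0 + 2 * r0 * v + v ^ 2) by ring. rewrite H0. field. }
  transitivity (((IZR m + (1 / 2 + u) * IZR n) ^ 2 + (r0 + v) ^ 2 * IZR n ^ 2) / (r0 + v)).
  { field; lra. }
  rewrite E. field. split; lra.
Qed.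

Lemma dlt_bound v p : Rabs v <= p -> Rabs (dlt v) <= 2 * p.
Proof.
  intro h. pose proof r0_bounds. unfold dlt, Rdiv. rewrite Rabs_mult, Rabs_inv, (Rabs_pos_eq r0) by lra.
  apply Rle_trans with (Rabs v * 2); [|lra]. apply Rmult_le_compat_l; [apply Rabs_pos|].
  replace 2 with (/ (1/2)) by field. apply Rinv_le_contravar; lra.
Qed.

Lemma alp_bound u v m n : (m, n) <> (0%Z, 0%Z) -> Rabs (alp u v m n) <= 4 * (Rabs u + Rabs v).
Proof.
  intro hmn. pose proof (Pz_pos m n hmn). pose proof r0_bounds. pose proof (ell_bound m n). pose proof (n2_bound m n).
  unfold alp, Rdiv. rewrite Rabs_mult, Rabs_inv, (Rabs_pos_eq (Pz m n)) by lra.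
  apply Rle_trans with (4 * Pz m n * (Rabs u + Rabs v) * / Pz m n); [|right; field; lra].
  apply Rmult_le_compat_r; [left; apply Rinv_0_lt_compat; auto|].
  eapply Rle_trans; [apply Rabs_triang|]. rewrite !Rabs_mult.
  rewrite (Rabs_pos_eq 2), (Rabs_pos_eq r0), (Rabs_pos_eq (IZR n ^ 2)) by lra.
  assert (hl : Rabs (ell m n) <= Pz m n) by (simpl in H1; lra).
  pose proof (Rabs_pos u). pose proof (Rabs_pos v). pose proof (Rabs_pos (ell m n)).
  assert (Rabs (ell m n) * Rabs u <= Pz m n * Rabs u) by (apply Rmult_le_compat_r; auto).
  assert (r0 * IZR n ^ 2 <= 2 * Pz m n) by nra.
  assert (r0 * IZR n ^ 2 * Rabs v <= 2 * Pz m n * Rabs v) by (apply Rmult_le_compat_r; auto).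
  assert (0 <= Pz m n * Rabs u) by (apply Rmult_le_pos; lra). lra.
Qed.

Lemma bet_bound u v m n : (m, n) <> (0%Z, 0%Z) -> 0 <= bet u v m n <= 2 * (Rabs u + Rabs v) ^ 2.
Proof.
  intro hmn. pose proof (Pz_pos m n hmn). pose proof (n2_bound m n).
  assert (h : u ^ 2 + v ^ 2 <= (Rabs u + Rabs v) ^ 2).
  { rewrite <- (pow2_abs u), <- (pow2_abs v). pose proof (Rabs_pos u). pose proof (Rabs_pos v). nra. }
  assert (h0 : 0 <= u ^ 2 + v ^ 2) by (pose proof (pow2_ge_0 u); pose proof (pow2_ge_0 v); lra).
  unfold bet. split.
  - unfold Rdiv. apply Rmult_le_pos; [nra| left; apply Rinv_0_lt_compat; lra].
  - apply Rle_trans with (2 * Pz m n * (Rabs u + Rabs v) ^ 2 / Pz m n); [|right; field; lra].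
    unfold Rdiv. apply Rmult_le_compat_r; [left; apply Rinv_0_lt_compat; auto|]. nra.
Qed.

Lemma Rpower_div x y s : 0 < x -> 0 < y -> Rpower (x / y) s = Rpower x s / Rpower y s.
Proof.
  intros. unfold Rpower, Rdiv. rewrite ln_mult, ln_Rinv by (try apply Rinv_0_lt_compat; auto).
  rewrite <- exp_Ropp, <- exp_plus. f_equal. ring.
Qed.

Lemma Rpower_mul x y s : 0 < x -> 0 < y -> Rpower (x * y) s = Rpower x s * Rpower y s.
Proof. intros. rewrite Rpower_mult_distr; auto. Qed.

Lemma le_Mp c M q : c <= M -> 0 <= q -> c * q <= M * q.
Proof. intros. apply Rmult_le_compat_r; auto. Qed.

Lemma cube_bound x p : Rabs x <= p -> Rabs x ^ 3 <= p ^ 3.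
Proof. intro. apply pow_incr. split; auto; apply Rabs_pos. Qed.

Lemma term_exp s : 1 < s -> exists Kt, 0 <= Kt /\ forall u v m n, (m, n) <> (0%Z, 0%Z) ->
  Rabs u + Rabs v <= 1/10 ->
  Rabs (1 / Rpower (Qp u v m n) s - Mk s u v m n) <=
    Kt * (Rpower r0 s / Rpower (Pz m n) s) * (Rabs u + Rabs v) ^ 3.
Proof.
  intro hs. destruct (taylor2 s) as [K1 [hK1 T1]]. destruct (taylor2 (- s)) as [K2 [hK2 T2]].
  set (c2 := (- s) * (- s - 1) / 2).
  set (M := 1 + 8 * K1 + 216 * K2 + 40 * Rabs c2 + 8 * s + 4 * s * s).
  assert (hc2 : 0 <= Rabs c2) by apply Rabs_pos.
  assert (hM : 1 <= M) by (unfold M; nra).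
  exists (10 * M ^ 2). split; [nra|].
  intros u v m n hmn hp.
  set (p := Rabs u + Rabs v). fold p in hp.
  assert (hp0 : 0 <= p) by (unfold p; pose proof (Rabs_pos u); pose proof (Rabs_pos v); lra).
  pose proof (Pz_pos m n hmn) as hP. pose proof r0_bounds as hr.
  assert (hv : Rabs v <= p) by (unfold p; pose proof (Rabs_pos u); lra).
  pose proof (dlt_bound v p hv) as hd. pose proof (alp_bound u v m n hmn) as ha. fold p in ha.
  pose proof (bet_bound u v m n hmn) as hb. fold p in hb.
  set (d := dlt v) in *. set (a := alp u v m n) in *. set (b := bet u v m n) in *.
  pose proof (abs_bounds _ _ hd) as hd'. pose proof (abs_bounds _ _ ha) as ha'.
  assert (hdd : -1/2 <= d <= 1/2) by nra.
  assert (hee : -1/2 <= a + b <= 1/2) by nra.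
  rewrite (Qp_eq u v m n hmn) by lra. fold a b d.
  rewrite Rpower_div by (try apply Rmult_lt_0_compat; lra).
  rewrite !Rpower_mul by lra.
  set (X := Rpower (1 + d) s). set (Y := Rpower (1 + (a + b)) (- s)).
  assert (EY : Rpower (1 + (a + b)) s = / Y) by (unfold Y; rewrite Rpower_Ropp, Rinv_inv; auto).
  rewrite EY.
  pose proof (Rpower_pos (Pz m n) s). pose proof (Rpower_pos r0 s). pose proof (Rpower_pos (1 + (a+b)) (-s)).
  fold Y in H1. pose proof (Rpower_pos (1 + d) s). fold X in H2.
  replace (1 / (Rpower (Pz m n) s * / Y / (Rpower r0 s * X))) with (Rpower r0 s / Rpower (Pz m n) s * (X * Y))
    by (field; repeat split; lra).
  unfold Mk. fold d a b.
  set (Rp := Rpower r0 s / Rpower (Pz m n) s).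
  assert (hRp : 0 < Rp) by (unfold Rp; apply Rdiv_lt_0_compat; auto).
  replace (Rp * (X * Y) - Rp * (1 + s * d + s * (s - 1) / 2 * d ^ 2 + - s * a + (- s * b + - s * (- s - 1) / 2 * a ^ 2) +
      s * d * (- s * a)))
    with (Rp * (X * Y - (1 + s * d + s * (s - 1) / 2 * d ^ 2 + - s * a + (- s * b + c2 * a ^ 2) +
      s * d * (- s * a)))) by (unfold c2; ring).
  rewrite Rabs_mult, (Rabs_pos_eq Rp) by lra.
  replace (10 * M ^ 2 * Rp * p ^ 3) with (Rp * (10 * M ^ 2 * p ^ 3)) by ring.
  apply Rmult_le_compat_l; [lra|].
  assert (hp1 : 0 <= p <= 1) by lra.
  pose proof (Rabs_pos d) as pd. pose proof (Rabs_pos a) as pa.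
  assert (m1 : 2 * s <= M) by (unfold M; nra).
  assert (m2 : 4 * s <= M) by (unfold M; nra).
  assert (m3 : 2 * s * (s - 1) <= M) by (unfold M; nra).
  assert (m4 : 8 * K1 <= M) by (unfold M; nra).
  assert (m5 : 2 * s + 16 * Rabs c2 <= M) by (unfold M; nra).
  assert (m6 : 216 * K2 + 20 * Rabs c2 <= M) by (unfold M; nra).
  assert (q1 : 0 <= p ^ 2) by (apply pow_le; lra). assert (q3 : 0 <= p ^ 3) by (apply pow_le; lra).
  assert (B1 : Rabs (s * d) <= M * p).
  { rewrite Rabs_mult, Rabs_pos_eq by lra.
    assert (s * Rabs d <= s * (2 * p)) by (apply Rmult_le_compat_l; lra).
    apply Rle_trans with ((2 * s) * p); [lra| apply le_Mp; auto]. }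
  assert (B2 : Rabs (s * (s - 1) / 2 * d ^ 2) <= M * p ^ 2).
  { rewrite Rabs_mult, (Rabs_pos_eq (s * (s - 1) / 2)) by nra.
    rewrite <- (pow2_abs d). rewrite (Rabs_pos_eq (Rabs d ^ 2)) by apply pow2_ge_0.
    assert (Rabs d ^ 2 <= 4 * p ^ 2) by nra.
    assert (s * (s - 1) / 2 * Rabs d ^ 2 <= s * (s - 1) / 2 * (4 * p ^ 2)) by (apply Rmult_le_compat_l; nra).
    apply Rle_trans with ((2 * s * (s - 1)) * p ^ 2); [lra| apply le_Mp; auto]. }
  assert (B3 : Rabs (X - (1 + s * d + s * (s - 1) / 2 * d ^ 2)) <= M * p ^ 3).
  { specialize (T1 d hdd).
    assert (Rabs d ^ 3 <= (2 * p) ^ 3) by (apply cube_bound; auto).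
    assert (K1 * Rabs d ^ 3 <= K1 * (2 * p) ^ 3) by (apply Rmult_le_compat_l; auto).
    unfold X. apply Rle_trans with ((8 * K1) * p ^ 3); [lra| apply le_Mp; auto]. }
  assert (B4 : Rabs (- s * a) <= M * p).
  { rewrite Rabs_mult, Rabs_Ropp, (Rabs_pos_eq s) by lra.
    assert (s * Rabs a <= s * (4 * p)) by (apply Rmult_le_compat_l; lra).
    apply Rle_trans with ((4 * s) * p); [lra| apply le_Mp; auto]. }
  assert (B5 : Rabs (- s * b + c2 * a ^ 2) <= M * p ^ 2).
  { eapply Rle_trans; [apply Rabs_triang|]. rewrite !Rabs_mult, Rabs_Ropp, (Rabs_pos_eq s) by lra.
    rewrite (Rabs_pos_eq b) by lra. rewrite (Rabs_pos_eq (a ^ 2)) by (apply pow2_ge_0).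
    assert (a ^ 2 <= 16 * p ^ 2) by (rewrite <- (pow2_abs a); nra).
    assert (Rabs c2 * a ^ 2 <= Rabs c2 * (16 * p ^ 2)) by (apply Rmult_le_compat_l; auto).
    assert (s * b <= s * (2 * p ^ 2)) by (apply Rmult_le_compat_l; lra).
    apply Rle_trans with ((2 * s + 16 * Rabs c2) * p ^ 2); [lra| apply le_Mp; auto]. }
  assert (B6 : Rabs (Y - (1 + - s * a + (- s * b + c2 * a ^ 2))) <= M * p ^ 3).
  { specialize (T2 (a + b) hee). fold Y in T2. fold c2 in T2.
    replace (Y - (1 + - s * a + (- s * b + c2 * a ^ 2))) with
      ((Y - (1 + - s * (a + b) + c2 * (a + b) ^ 2)) + c2 * (2 * a * b + b ^ 2)) by ring.
    eapply Rle_trans; [apply Rabs_triang|].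
    assert (Rabs (a + b) <= 6 * p).
    { eapply Rle_trans; [apply Rabs_triang|]. rewrite (Rabs_pos_eq b) by lra. nra. }
    assert (Rabs (a + b) ^ 3 <= (6 * p) ^ 3) by (apply cube_bound; auto).
    assert (K2 * Rabs (a + b) ^ 3 <= K2 * (6 * p) ^ 3) by (apply Rmult_le_compat_l; auto).
    assert (Rabs (2 * a * b + b ^ 2) <= 20 * p ^ 3).
    { eapply Rle_trans; [apply Rabs_triang|]. rewrite !Rabs_mult, (Rabs_pos_eq 2) by lra.
      rewrite (Rabs_pos_eq b) by lra. rewrite (Rabs_pos_eq (b ^ 2)) by apply pow2_ge_0.
      assert (Rabs a * b <= 4 * p * (2 * p ^ 2)) by (apply Rmult_le_compat; lra).
      assert (b ^ 2 <= (2 * p ^ 2) ^ 2) by (apply pow_incr; lra).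
      assert (p ^ 4 <= p ^ 3) by (replace (p ^ 4) with (p ^ 3 * p) by ring; assert (0 <= p ^ 3) by (apply pow_le; lra); nra).
      nra. }
    rewrite Rabs_mult.
    assert (Rabs c2 * Rabs (2 * a * b + b ^ 2) <= Rabs c2 * (20 * p ^ 3)) by (apply Rmult_le_compat_l; auto).
    apply Rle_trans with ((216 * K2 + 20 * Rabs c2) * p ^ 3); [lra| apply le_Mp; auto]. }
  pose proof (prod3 _ _ _ _ _ _ M p hp1 hM B1 B2 B3 B4 B5 B6) as HH.
  match goal with |- Rabs ?L <= _ => replace L with
    ((1 + s * d + s * (s - 1) / 2 * d ^ 2 + (X - (1 + s * d + s * (s - 1) / 2 * d ^ 2))) *
     (1 + - s * a + (- s * b + c2 * a ^ 2) + (Y - (1 + - s * a + (- s * b + c2 * a ^ 2)))) -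
     (1 + s * d + s * (s - 1) / 2 * d ^ 2 + - s * a + (- s * b + c2 * a ^ 2) + s * d * (- s * a))) by ring end.
  exact HH.
Qed.

Lemma r0_pows : r0 ^ 2 = 3/4 /\ r0 ^ 3 = 3/4 * r0 /\ r0 ^ 4 = 9/16.
Proof. pose proof r0_sq. split; [|split].
  - simpl. lra.
  - replace (r0 ^ 3) with (r0 * r0 * r0) by ring. rewrite H. ring.
  - replace (r0 ^ 4) with ((r0 * r0) * (r0 * r0)) by ring. rewrite H. field. Qed.

Lemma Mk_conv s u v : 1 < s ->
  conv (Mk s u v) (Rpower r0 s * Tsum s * (1 + s * (s - 1) / 3 * (u ^ 2 + v ^ 2))).
Proof.
  intro hs. set (T := Tsum s). set (R := Rpower r0 s). set (c2 := (- s) * (- s - 1) / 2).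
  set (d := dlt v).
  pose proof (conv_T s hs) as H0. pose proof (Bsum1 s hs) as H1. pose proof (Bsum2 s hs) as H2.
  pose proof (Bsum3 s hs) as H3. pose proof (Bsum4 s hs) as H4. pose proof (Bsum5 s hs) as H5.
  fold T in H0, H1, H2, H3, H4, H5.
  pose proof (conv_lin (R * (1 + s * d + s * (s - 1) / 2 * d ^ 2)) (R * (- 2 * s * u - 2 * s ^ 2 * d * u)) _ _ _ _ H0 H1) as G1.
  pose proof (conv_lin 1 (R * (- 2 * s * r0 * v - s * (u ^ 2 + v ^ 2) - 2 * s ^ 2 * d * r0 * v)) _ _ _ _ G1 H2) as G2.
  pose proof (conv_lin 1 (R * (4 * c2 * u ^ 2)) _ _ _ _ G2 H3) as G3.
  pose proof (conv_lin 1 (R * (8 * c2 * r0 * u * v)) _ _ _ _ G3 H4) as G4.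
  pose proof (conv_lin 1 (R * (4 * c2 * r0 ^ 2 * v ^ 2)) _ _ _ _ G4 H5) as G5.
  eapply conv_ext in G5.
  2: { intros m n hmn. pose proof (Pz_pos m n hmn) as hP. cbv beta.
       rewrite !Rpower_plus_nat by auto. pose proof (Rpower_pos (Pz m n) s) as hPs.
       unfold Mk, alp, bet. fold d R c2. simpl pow.
       instantiate (1 := Mk s u v). unfold Mk, alp, bet. fold d R c2.
       field. split; apply Rgt_not_eq; auto. }
  match goal with H : conv _ ?V |- conv _ ?W => replace W with V; auto end.
  destruct r0_pows as [h2 [h3 h4]]. pose proof r0_pos. unfold d, dlt, c2.
  field_simplify; try lra. rewrite ?h2, ?h3, ?h4. field.
Qed.

Lemma sq_partial_le F G N : (forall m n, (m, n) <> (0%Z, 0%Z) -> F m n <= G m n) ->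
  sq_partial F N <= sq_partial G N.
Proof.
  intro H. rewrite !sq_partial_eq. apply sum_Rle; intros. apply sum_Rle; intros.
  unfold Gz. destruct (Z.eqb_spec (zi n N) 0); destruct (Z.eqb_spec (zi n0 N) 0); simpl; try lra;
  apply H; intro E; inversion E; congruence.
Qed.

Lemma conv_abs_bound F G L LG : conv F L -> conv G LG ->
  (forall m n, (m, n) <> (0%Z, 0%Z) -> Rabs (F m n) <= G m n) -> Rabs L <= LG.
Proof.
  intros HF HG H. apply Rabs_le. split.
  - assert (HG' := conv_lin (-1) 0 _ _ _ _ HG HG).
    assert (- LG = -1 * LG + 0 * LG) by ring. rewrite H0.
    apply (Rle_cv_lim (Un := sq_partial (fun m n => -1 * G m n + 0 * G m n)) (Vn := sq_partial F)); auto.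
    intro N. apply sq_partial_le. intros. specialize (H m n H1). apply abs_bounds in H. lra.
  - apply (Rle_cv_lim (Un := sq_partial F) (Vn := sq_partial G)); auto.
    intro N. apply sq_partial_le. intros. specialize (H m n H0). apply abs_bounds in H. lra.
Qed.

Lemma Z_exp s : 1 < s -> exists K, 0 <= K /\ forall u v, Rabs u + Rabs v <= 1/10 ->
  exists Z, conv (fun m n => 1 / Rpower (Qp u v m n) s) Z /\
    Rabs (Z - Rpower r0 s * Tsum s * (1 + s * (s - 1) / 3 * (u ^ 2 + v ^ 2))) <= K * (Rabs u + Rabs v) ^ 3.
Proof.
  intro hs. destruct (term_exp s hs) as [Kt [hKt HT]].
  pose proof (Tsum_pos s hs) as hT. pose proof (Rpower_pos r0 s) as hR.
  exists (Kt * Rpower r0 s * Tsum s). split; [apply Rmult_le_pos; [apply Rmult_le_pos|]; lra|].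
  intros u v huv. set (p := Rabs u + Rabs v). fold p in huv.
  assert (hp : 0 <= p ^ 3) by (apply pow_le; unfold p; pose proof (Rabs_pos u); pose proof (Rabs_pos v); lra).
  set (C := Kt * Rpower r0 s * p ^ 3).
  assert (hC : 0 <= C) by (unfold C; apply Rmult_le_pos; [apply Rmult_le_pos|]; lra).
  set (Rem := fun m n => 1 / Rpower (Qp u v m n) s - Mk s u v m n).
  assert (DR : Dom s C Rem).
  { split; auto. intros m n hmn. unfold Rem. eapply Rle_trans; [apply HT; auto|].
    right. unfold C, p. field. apply Rgt_not_eq. apply Rpower_pos. }
  destruct (dom_conv s C Rem hs DR) as [LR HLR].
  pose proof (Mk_conv s u v hs) as HM.
  exists (1 * (Rpower r0 s * Tsum s * (1 + s * (s - 1) / 3 * (u ^ 2 + v ^ 2))) + 1 * LR). split.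
  - eapply conv_ext; [|apply (conv_lin 1 1 _ _ _ _ HM HLR)]. intros. unfold Rem. ring.
  - replace (1 * (Rpower r0 s * Tsum s * (1 + s * (s - 1) / 3 * (u ^ 2 + v ^ 2))) + 1 * LR -
       Rpower r0 s * Tsum s * (1 + s * (s - 1) / 3 * (u ^ 2 + v ^ 2))) with LR by ring.
    assert (HG := conv_lin C 0 _ _ _ _ (conv_T s hs) (conv_T s hs)).
    eapply Rle_trans; [apply (conv_abs_bound _ _ _ _ HLR HG)|].
    + intros m n hmn. destruct DR as [_ DR]. eapply Rle_trans; [apply DR; auto|]. right; field.
      apply Rgt_not_eq, Rpower_pos.
    + right. unfold C. ring.
Qed.

Lemma Qp_pos u v m n : (m, n) <> (0%Z, 0%Z) -> Rabs u + Rabs v <= 1/10 -> 0 < Qp u v m n.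
Proof.
  intros hmn huv. pose proof (Rabs_pos u). pose proof (Rabs_pos v).
  rewrite Qp_eq by (auto; lra).
  pose proof (alp_bound u v m n hmn). pose proof (bet_bound u v m n hmn).
  assert (Rabs v <= Rabs u + Rabs v) by lra. pose proof (dlt_bound v _ H3).
  apply abs_bounds in H1. apply abs_bounds in H4. pose proof (Pz_pos m n hmn). pose proof r0_pos.
  apply Rdiv_lt_0_compat; apply Rmult_lt_0_compat; nra.
Qed.

Lemma E_val a1 a2 t1 t2 A x y Z1 Z2 : 0 < A ->
  Rabs (x - 1/2) + Rabs (y - r0) <= 1/10 ->
  conv (fun m n => 1 / Rpower (Qp (x - 1/2) (y - r0) m n) t1) Z1 ->
  conv (fun m n => 1 / Rpower (Qp (x - 1/2) (y - r0) m n) t2) Z2 ->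
  E_f (V_LJ a1 a2 t1 t2) x y A = a2 / Rpower A t2 * Z2 + - (a1 / Rpower A t1) * Z1.
Proof.
  intros hA huv H1 H2. unfold E_f. apply lattice_sum_eq.
  eapply conv_ext; [|apply (conv_lin _ _ _ _ _ _ H2 H1)].
  intros m n hmn. cbv beta. pose proof (Qp_pos _ _ m n hmn huv) as hQ.
  unfold V_LJ.
  replace (1 / y * (IZR m + x * IZR n) ^ 2 + y * IZR n ^ 2) with (Qp (x - 1/2) (y - r0) m n)
    by (unfold Qp; replace (1 / 2 + (x - 1 / 2)) with x by ring; replace (r0 + (y - r0)) with y by ring; auto).
  rewrite !Rpower_mul by lra.
  pose proof (Rpower_pos A t1). pose proof (Rpower_pos A t2).
  pose proof (Rpower_pos (Qp (x - 1/2) (y - r0) m n) t1). pose proof (Rpower_pos (Qp (x - 1/2) (y - r0) m n) t2).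
  field. repeat split; apply Rgt_not_eq; auto.
Qed.

Definition Dc a1 a2 t1 t2 A :=
  a2 / Rpower A t2 * (Rpower r0 t2 * Tsum t2 * (t2 * (t2 - 1) / 3)) -
  a1 / Rpower A t1 * (Rpower r0 t1 * Tsum t1 * (t1 * (t1 - 1) / 3)).

Lemma E_exp a1 a2 t1 t2 A : 0 <= a1 -> 0 <= a2 -> 1 < t1 -> 1 < t2 -> 0 < A ->
  exists K, 0 <= K /\ forall x y, Rabs (x - 1/2) + Rabs (y - r0) <= 1/10 ->
  Rabs (E_f (V_LJ a1 a2 t1 t2) x y A - E_f (V_LJ a1 a2 t1 t2) (1/2) r0 A -
        Dc a1 a2 t1 t2 A * ((x - 1/2) ^ 2 + (y - r0) ^ 2)) <=
  K * (Rabs (x - 1/2) + Rabs (y - r0)) ^ 3.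
Proof.
  intros ha1 ha2 ht1 ht2 hA.
  destruct (Z_exp t1 ht1) as [K1 [hK1 HZ1]]. destruct (Z_exp t2 ht2) as [K2 [hK2 HZ2]].
  set (b1 := a1 / Rpower A t1). set (b2 := a2 / Rpower A t2).
  assert (hb1 : 0 <= b1) by (unfold b1; apply Rmult_le_pos; auto; left; apply Rinv_0_lt_compat, Rpower_pos).
  assert (hb2 : 0 <= b2) by (unfold b2; apply Rmult_le_pos; auto; left; apply Rinv_0_lt_compat, Rpower_pos).
  exists (b2 * K2 + b1 * K1). split; [nra|].
  intros x y hxy.
  assert (h0 : Rabs (1/2 - 1/2) + Rabs (r0 - r0) <= 1/10) by (rewrite !Rminus_diag, Rabs_R0; lra).
  destruct (HZ1 _ _ hxy) as [Z1 [C1 E1]]. destruct (HZ2 _ _ hxy) as [Z2 [C2 E2]].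
  destruct (HZ1 _ _ h0) as [Z10 [C10 E10]]. destruct (HZ2 _ _ h0) as [Z20 [C20 E20]].
  rewrite (E_val _ _ _ _ _ _ _ _ _ hA hxy C1 C2).
  rewrite (E_val _ _ _ _ _ _ _ _ _ hA h0 C10 C20).
  fold b1 b2.
  rewrite !Rminus_diag, !Rabs_R0 in E10, E20.
  replace ((0 + 0) ^ 3) with 0 in E10, E20 by ring. rewrite Rmult_0_r in E10, E20.
  apply abs_bounds in E10. apply abs_bounds in E20.
  assert (Z10 = Rpower r0 t1 * Tsum t1) by (replace (0 ^ 2 + 0 ^ 2) with 0 in E10 by ring; lra).
  assert (Z20 = Rpower r0 t2 * Tsum t2) by (replace (0 ^ 2 + 0 ^ 2) with 0 in E20 by ring; lra).
  subst Z10 Z20. unfold Dc. fold b1 b2.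
  set (u := x - 1/2) in *. set (v := y - r0) in *.
  match goal with |- Rabs ?L <= _ => replace L with
    (b2 * (Z2 - Rpower r0 t2 * Tsum t2 * (1 + t2 * (t2 - 1) / 3 * (u ^ 2 + v ^ 2))) +
     - b1 * (Z1 - Rpower r0 t1 * Tsum t1 * (1 + t1 * (t1 - 1) / 3 * (u ^ 2 + v ^ 2)))) by ring end.
  eapply Rle_trans; [apply Rabs_triang|]. rewrite !Rabs_mult, Rabs_Ropp, !Rabs_pos_eq by auto.
  assert (b2 * Rabs (Z2 - Rpower r0 t2 * Tsum t2 * (1 + t2 * (t2 - 1) / 3 * (u ^ 2 + v ^ 2))) <=
     b2 * (K2 * (Rabs u + Rabs v) ^ 3)) by (apply Rmult_le_compat_l; auto).
  assert (b1 * Rabs (Z1 - Rpower r0 t1 * Tsum t1 * (1 + t1 * (t1 - 1) / 3 * (u ^ 2 + v ^ 2))) <=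
     b1 * (K1 * (Rabs u + Rabs v) ^ 3)) by (apply Rmult_le_compat_l; auto).
  rewrite (Rabs_pos_eq b1) by auto. lra.
Qed.

Lemma S1_pos t : 1 < t -> 0 < S1 (t + 2).
Proof. intro. rewrite S1_eq by auto. pose proof (Tsum_pos t H). lra. Qed.

Lemma Dc_sign a1 a2 t1 t2 A : 0 < a1 -> 0 < a2 -> 1 < t1 -> t1 < t2 -> 0 < A ->
  exists c X, 0 < c /\ Dc a1 a2 t1 t2 A = c * (exp X - 1) /\
    ln (A0 a1 a2 t1 t2) = ln A + X / (t2 - t1) /\ 0 < A0 a1 a2 t1 t2.
Proof.
  intros ha1 ha2 ht1 ht12 hA.
  assert (ht2 : 1 < t2) by lra.
  set (W1 := a1 * t1 * (t1 - 1) * S1 (t1 + 2)). set (W2 := a2 * t2 * (t2 - 1) * S1 (t2 + 2)).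
  pose proof (S1_pos t1 ht1). pose proof (S1_pos t2 ht2).
  assert (hW1 : 0 < W1) by (unfold W1; repeat apply Rmult_lt_0_compat; lra).
  assert (hW2 : 0 < W2) by (unfold W2; repeat apply Rmult_lt_0_compat; lra).
  set (q := W2 / W1). assert (hq : 0 < q) by (apply Rdiv_lt_0_compat; auto).
  pose proof r0_pos as hr.
  set (X := ln q + (t2 - t1) * (ln r0 - ln A)).
  exists (W1 / 2 * exp (t1 * ln r0 - t1 * ln A)), X. split; [|split; [|split]].
  - apply Rmult_lt_0_compat; [lra| apply exp_pos].
  - unfold Dc. rewrite <- (Rmult_1_r (Tsum t1)) at 1. rewrite <- (Rmult_1_r (Tsum t2)) at 1.
    assert (E1 : Tsum t1 = 3 / 2 * S1 (t1 + 2)) by (rewrite S1_eq by auto; field).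
    assert (E2 : Tsum t2 = 3 / 2 * S1 (t2 + 2)) by (rewrite S1_eq by auto; field).
    rewrite E1, E2. unfold X, Rpower.
    rewrite exp_plus. rewrite exp_ln by auto. unfold q.
    replace (exp ((t2 - t1) * (ln r0 - ln A))) with (exp (t2 * ln r0) * / exp (t2 * ln A) * / (exp (t1 * ln r0) * / exp (t1 * ln A))).
    2: { rewrite <- !exp_Ropp, <- !exp_plus. rewrite <- exp_Ropp, <- exp_plus. f_equal. ring. }
    replace (exp (t1 * ln r0 - t1 * ln A)) with (exp (t1 * ln r0) * / exp (t1 * ln A))
      by (rewrite <- exp_Ropp, <- exp_plus; f_equal; ring).
    unfold W1, W2. pose proof (exp_pos (t1 * ln r0)). pose proof (exp_pos (t1 * ln A)).
    pose proof (exp_pos (t2 * ln r0)). pose proof (exp_pos (t2 * ln A)).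
    field. repeat split; apply Rgt_not_eq; auto; try lra; repeat apply Rmult_lt_0_compat; lra.
  - unfold A0. fold W1 W2 q. fold r0. rewrite ln_mult by (auto; apply Rpower_pos).
    rewrite ln_Rpower. unfold X. field. lra.
  - unfold A0. fold W1 W2 q. fold r0. apply Rmult_lt_0_compat; auto; apply Rpower_pos.
Qed.

Lemma sq_lower u v : (Rabs u + Rabs v) ^ 2 <= 2 * (u ^ 2 + v ^ 2).
Proof. rewrite <- (pow2_abs u), <- (pow2_abs v). pose proof (pow2_ge_0 (Rabs u - Rabs v)). nra. Qed.

Lemma local_core D K x y eps : 0 < D -> 0 <= K -> 0 < eps -> eps <= 1/20 -> eps <= D / (4 * K + 4) ->
  Rabs (x - 1/2) < eps -> Rabs (y - r0) < eps -> (x, y) <> (1/2, r0) ->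
  let p := Rabs (x - 1/2) + Rabs (y - r0) in
  0 < p /\ p <= 1/10 /\ K * p ^ 3 < D * ((x - 1/2) ^ 2 + (y - r0) ^ 2).
Proof.
  intros hD hK he he1 he2 hx hy hne p.
  assert (hp : 0 < p).
  { unfold p. pose proof (Rabs_pos (x - 1/2)). pose proof (Rabs_pos (y - r0)).
    destruct (Req_dec (x - 1/2) 0); destruct (Req_dec (y - r0) 0).
    - exfalso. apply hne. f_equal; lra.
    - pose proof (Rabs_pos_lt _ H2). lra.
    - pose proof (Rabs_pos_lt _ H1). lra.
    - pose proof (Rabs_pos_lt _ H1). lra. }
  assert (hp2 : p < 2 * eps) by (unfold p; lra).
  split; auto. split; [lra|].
  pose proof (sq_lower (x - 1/2) (y - r0)) as hs. fold p in hs.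
  assert (K * p < D / 2).
  { assert (K * p <= K * (2 * eps)) by (apply Rmult_le_compat_l; lra).
    assert (K * (2 * eps) <= K * (2 * (D / (4 * K + 4)))) by (apply Rmult_le_compat_l; lra).
    assert (K * (2 * (D / (4 * K + 4))) < D / 2).
    { replace (K * (2 * (D / (4 * K + 4)))) with (D / 2 * (K / (K + 1))) by (field; lra).
      assert (K / (K + 1) < 1) by (apply (Rmult_lt_reg_r (K + 1)); [lra|]; field_simplify; lra).
      nra. }
    lra. }
  assert (0 < p ^ 2) by (apply pow_lt; auto).
  replace (K * p ^ 3) with ((K * p) * p ^ 2) by ring.
  assert (K * p * p ^ 2 < D / 2 * p ^ 2) by (apply Rmult_lt_compat_r; auto).
  nra.
Qed.

Lemma sign_helper c X A B t : 0 < c -> 0 < t -> 0 < A -> 0 < B -> ln B = ln A + X / t ->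
  (0 < c * (exp X - 1) <-> A < B) /\ (c * (exp X - 1) < 0 <-> A > B).
Proof.
  intros hc ht hA hB E.
  destruct (Rtotal_order X 0) as [h|[h|h]].
  - assert (exp X < 1) by (rewrite <- exp_0; apply exp_increasing; auto).
    assert (X / t < 0) by (unfold Rdiv; apply Rmult_neg_pos; [auto| apply Rinv_0_lt_compat; auto]).
    assert (ln B < ln A) by lra. apply ln_lt_inv in H1; auto.
    split; split; intro; nra.
  - subst. rewrite exp_0. unfold Rdiv in E. rewrite Rmult_0_l, Rplus_0_r in E.
    apply ln_inv in E; auto. subst. split; split; intro; lra.
  - assert (1 < exp X) by (rewrite <- exp_0; apply exp_increasing; auto).
    assert (0 < X / t) by (apply Rdiv_lt_0_compat; auto).
    assert (ln A < ln B) by lra. apply ln_lt_inv in H1; auto.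
    split; split; intro; nra.
Qed.

Theorem theorem4p2 (a1 a2 t1 t2 : R) (ha1 : 0 < a1) (ha2 : 0 < a2)
  (ht1 : 1 < t1) (ht12 : t1 < t2) :
  (forall A, 0 < A -> A < A0 a1 a2 t1 t2 ->
     strict_local_min (fun x y => E_f (V_LJ a1 a2 t1 t2) x y A) (1/2) (sqrt 3 / 2)) /\
  (forall A, A > A0 a1 a2 t1 t2 ->
     strict_local_max (fun x y => E_f (V_LJ a1 a2 t1 t2) x y A) (1/2) (sqrt 3 / 2)).
Proof.
  assert (ht2 : 1 < t2) by lra.
  assert (Gen : forall A, 0 < A -> exists D K, (0 < D <-> A < A0 a1 a2 t1 t2) /\ (D < 0 <-> A > A0 a1 a2 t1 t2) /\
     0 <= K /\ forall x y, Rabs (x - 1/2) + Rabs (y - r0) <= 1/10 ->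
     Rabs (E_f (V_LJ a1 a2 t1 t2) x y A - E_f (V_LJ a1 a2 t1 t2) (1/2) r0 A - D * ((x - 1/2) ^ 2 + (y - r0) ^ 2)) <=
     K * (Rabs (x - 1/2) + Rabs (y - r0)) ^ 3).
  { intros A hA. destruct (Dc_sign a1 a2 t1 t2 A ha1 ha2 ht1 ht12 hA) as [c [X [hc [ED [EL hA0]]]]].
    destruct (E_exp a1 a2 t1 t2 A ltac:(lra) ltac:(lra) ht1 ht2 hA) as [K [hK HK]].
    exists (Dc a1 a2 t1 t2 A), K.
    destruct (sign_helper c X A (A0 a1 a2 t1 t2) (t2 - t1) hc ltac:(lra) hA hA0 EL) as [S1' S2'].
    rewrite <- ED in S1', S2'. split; [exact S1'| split; [exact S2'| split; auto]]. }
  assert (hA0 : 0 < A0 a1 a2 t1 t2).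
  { destruct (Dc_sign a1 a2 t1 t2 1 ha1 ha2 ht1 ht12 ltac:(lra)) as [c [X [_ [_ [_ h]]]]]. auto. }
  split.
  - intros A hA hlt. destruct (Gen A hA) as [D [K [[_ HD] [_ [hK HE]]]]].
    specialize (HD hlt).
    set (eps := Rmin (1/20) (D / (4 * K + 4))).
    assert (he : 0 < eps) by (unfold eps; apply Rmin_pos; [lra| apply Rdiv_lt_0_compat; lra]).
    exists eps. split; auto. intros x y hy hx hy' hne. fold r0 in *.
    destruct (local_core D K x y eps HD hK he (Rmin_l _ _) (Rmin_r _ _) hx hy' hne) as [hp [hp1 hp2]].
    specialize (HE x y hp1). apply abs_bounds in HE. lra.
  - intros A hgt. assert (hA : 0 < A) by lra. destruct (Gen A hA) as [D [K [_ [[_ HD] [hK HE]]]]].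
    specialize (HD hgt).
    set (eps := Rmin (1/20) ((- D) / (4 * K + 4))).
    assert (he : 0 < eps) by (unfold eps; apply Rmin_pos; [lra| apply Rdiv_lt_0_compat; lra]).
    exists eps. split; auto. intros x y hy hx hy' hne. fold r0 in *.
    destruct (local_core (- D) K x y eps ltac:(lra) hK he (Rmin_l _ _) (Rmin_r _ _) hx hy' hne) as [hp [hp1 hp2]].
    specialize (HE x y hp1). apply abs_bounds in HE. lra.
Qed.
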